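(* Let $n=2$ and let $h:[0,1]\to[0,1]$ be a $C^\infty$ function which is not identically zero on $[0,\tfrac12]$ and not identically zero on $[\tfrac12,1]$. Then there exist functions $F_1(r),F_2(r)$ (depending on $h$) with the following property: if $\{p_r\}$ is any sequence of integers with $0\le p_r\le r-2$ and $\lim_{r\to\infty}(2p_r-r)/\sqrt r=a$ for some $a\in\mathbb{R}$, then for almost every $x\in\Omega$, \[ \lim_{r\to\infty}F_1(r)\cdot k_{p_r,1}\big(\mathrm{B}^h_r(x)\big)=e^{-a^2/2}\quad\text{and}\quad \lim_{r\to\infty}F_2(r)\cdot k_{p_r,2}\big(\mathrm{B}^h_r(x)\big)=e^{-a^2/2}. \]
   Context: Here $n=2$. For an integer $r\ge 2$ and $i\in[r]=\{1,\dots,r\}$, write $[r]\setminus\{i\}=\{d_0<d_1<\dots<d_{r-2}\}$; the pure diagram $\pi(r,i)$ is the array of real numbers $k_{p,q}(\pi(r,i))$, $p=0,\dots,r-2$, $q=1,2$, with $k_{p,q}(\pi(r,i))=0$ if $q\ne d_p-p$ and $k_{p,d_p-p}(\pi(r,i))=(r-2)!\prod_{0\le\ell\le r-2,\ \ell\neq p}\frac{1}{|d_\ell-d_p|}$. Let $\Omega=[0,1]^{\mathbb{Z}_{>0}}$ with the product of uniform (Lebesgue) probability measures; for $x=(x_i)_{i\ge 1}\in\Omega$ the weighted Betti table $\mathrm{B}^h_r(x)$ has entries \[ k_{p,q}\big(\mathrm{B}^h_r(x)\big)=\sum_{i=1}^r h\!\left(\tfrac{i}{r}\right)x_i\,k_{p,q}(\pi(r,i)).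 \] *)

(* Defs.v *)
From Stdlib Require Import Reals List Arith.
Import ListNotations.
Open Scope R_scope.

Definition lsum (l : list R) : R := fold_right Rplus 0 l.
Definition lprod (l : list R) : R := fold_right Rmult 1 l.

(* [r] \ {i} = {d_0 < ... < d_{r-2}}  (i in 1..r) : d_p *)
Definition dseq (i p : nat) : nat := if Nat.ltb (S p) i then S p else S (S p).

Definition pure_entry (r i p q : nat) : R :=
  if Nat.eqb (dseq i p - p)%nat q then
    INR (fact (r - 2)) *
    lprod (map (fun l => / Rabs (INR (dseq i l) - INR (dseq i p)))
               (filter (fun l => negb (Nat.eqb l p)) (seq 0 (r - 1))))
  else 0.

Definition betti_entry (h : R -> R) (r : nat) (x : nat -> R) (p q : nat) : R :=
  lsum (map (fun i => h (INR i / INR r) * x i * pure_entry r i p q) (seq 1 r)).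

Definition smooth (h : R -> R) : Prop :=
  exists f : nat -> R -> R,
    (forall t, f 0%nat t = h t) /\
    (forall k t, derivable_pt_lim (f k) t (f (S k) t)).

(* Omega = [0,1]^{Z>0}; points are x : nat -> R, coordinate 0 is unused. *)
Definition in_Omega (x : nat -> R) : Prop :=
  forall i, (1 <= i)%nat -> 0 <= x i <= 1.

Record box := { bn : nat; ba : nat -> R; bb : nat -> R }.
Definition box_ok (B : box) : Prop :=
  forall i, (1 <= i <= bn B)%nat -> 0 <= ba B i /\ ba B i <= bb B i /\ bb B i <= 1.
Definition in_box (B : box) (x : nat -> R) : Prop :=
  forall i, (1 <= i <= bn B)%nat -> ba B i <= x i <= bb B i.
Definition box_vol (B : box) : R :=
  lprod (map (fun i => bb B i - ba B i) (seq 1 (bn B))).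

(* Null sets of the product Lebesgue measure on Omega: outer measure zero
   (countable covers by cylinder boxes of arbitrarily small total volume). *)
Definition Omega_null (N : (nat -> R) -> Prop) : Prop :=
  forall eps, 0 < eps ->
    exists C : nat -> box,
      (forall k, box_ok (C k)) /\
      (forall x, in_Omega x -> N x -> exists k, in_box (C k) x) /\
      (forall m, lsum (map (fun k => box_vol (C k)) (seq 0 m)) <= eps).

Definition ae_Omega (P : (nat -> R) -> Prop) : Prop :=
  Omega_null (fun x => ~ P x).

(* Main.v *)
Require Import Defs.
From Stdlib Require Import Reals Lra Lia List Arith ZArith FinFun Classical.
From Stdlib Require Cantor.
Import ListNotations.
Open Scope R_scope.

Lemma lsum_app l1 l2 : lsum (l1 ++ l2) = lsum l1 + lsum l2.
Proof. induction l1; simpl; [lra|rewrite IHl1; lra]. Qed.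
Lemma lprod_app l1 l2 : lprod (l1 ++ l2) = lprod l1 * lprod l2.
Proof. induction l1; simpl; [lra|rewrite IHl1; lra]. Qed.

Lemma lsum_ext {A} (f g : A -> R) l : (forall x, In x l -> f x = g x) ->
  lsum (map f l) = lsum (map g l).
Proof. induction l; simpl; intros H; auto. rewrite H, IHl; auto. Qed.
Lemma lprod_ext {A} (f g : A -> R) l : (forall x, In x l -> f x = g x) ->
  lprod (map f l) = lprod (map g l).
Proof. induction l; simpl; intros H; auto. rewrite H, IHl; auto. Qed.
Lemma lsum_le {A} (f g : A -> R) l : (forall x, In x l -> f x <= g x) ->
  lsum (map f l) <= lsum (map g l).
Proof. induction l; simpl; intros H; [lra|]. pose proof (H a (or_introl eq_refl)).
  pose proof (IHl (fun x h => H x (or_intror h))). lra. Qed.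
Lemma lsum_scal {A} c (f : A -> R) l : lsum (map (fun x => c * f x) l) = c * lsum (map f l).
Proof. induction l; simpl; [ring|rewrite IHl; ring]. Qed.
Lemma lsum_plus {A} (f g : A -> R) l :
  lsum (map (fun x => f x + g x) l) = lsum (map f l) + lsum (map g l).
Proof. induction l; simpl; [ring|rewrite IHl; ring]. Qed.
Lemma lsum_ge0 {A} (f : A -> R) l : (forall x, In x l -> 0 <= f x) -> 0 <= lsum (map f l).
Proof. intros H. pose proof (lsum_le (fun _ => 0) f l H).
  replace (lsum (map (fun _ => 0) l)) with 0 in H0; auto.
  clear; induction l; simpl; auto; lra. Qed.
Lemma lsum_const {A} c (l : list A) : lsum (map (fun _ => c) l) = INR (length l) * c.
Proof. induction l. simpl; ring. change (c + lsum (map (fun _ => c) l) = INR (S (length l)) * c).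
  rewrite IHl, S_INR; ring. Qed.
Lemma lsum_abs {A} (f : A -> R) l : Rabs (lsum (map f l)) <= lsum (map (fun x => Rabs (f x)) l).
Proof. induction l; simpl. rewrite Rabs_R0; lra.
  eapply Rle_trans; [apply Rabs_triang|lra]. Qed.

Lemma filter_all {A} (f : A -> bool) l : (forall x, In x l -> f x = true) -> filter f l = l.
Proof. induction l; simpl; intros H; auto. rewrite H; auto. f_equal; auto. Qed.

Lemma LPg a k s j : INR a + s = INR j + 1 ->
  lprod (map (fun l => / (INR l + s)) (seq a k)) * INR (fact (j + k)) = INR (fact j).
Proof.
  intros H. induction k.
  - simpl. rewrite Nat.add_0_r; ring.
  - rewrite seq_S, map_app, lprod_app. simpl.
    replace (j + S k)%nat with (S (j + k)) by lia.
    rewrite fact_simpl, mult_INR, <- IHk.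
    assert (E : INR (a + k) + s = INR (S (j + k))).
    { rewrite !plus_INR, S_INR, plus_INR. lra. }
    rewrite E. assert (0 < INR (S (j + k))) by (apply lt_0_INR; lia).
    field. lra.
Qed.

Lemma LDg N a k : (a + k <= N)%nat ->
  lprod (map (fun l => / (INR N - INR l)) (seq a k)) * INR (fact (N - a)) = INR (fact (N - a - k)).
Proof.
  intros H. induction k.
  - simpl. rewrite Nat.sub_0_r; ring.
  - rewrite seq_S, map_app, lprod_app. simpl. rewrite Rmult_1_r.
    rewrite Rmult_comm, <- Rmult_assoc, (Rmult_comm (INR _)), IHk by lia.
    replace (N - a - k)%nat with (S (N - a - S k)) by lia.
    rewrite fact_simpl, mult_INR.
    assert (E : INR N - INR (a + k) = INR (S (N - a - S k))).
    { rewrite S_INR, !minus_INR by lia. rewrite plus_INR, S_INR. lra. }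
    rewrite E. assert (0 < INR (S (N - a - S k))) by (apply lt_0_INR; lia).
    field. lra.
Qed.

Lemma seq_split3 p n : (p < n)%nat -> seq 0 n = seq 0 p ++ [p] ++ seq (S p) (n - S p).
Proof. intros H. replace n with (p + (1 + (n - S p)))%nat at 1 by lia.
  rewrite !seq_app. simpl. rewrite Nat.add_1_r. reflexivity. Qed.

Lemma filter_split p n f : (p < n)%nat ->
  lprod (map f (filter (fun l => negb (Nat.eqb l p)) (seq 0 n))) =
  lprod (map f (seq 0 p)) * lprod (map f (seq (S p) (n - S p))).
Proof.
  intros H. rewrite seq_split3 with (p := p) by auto.
  rewrite !filter_app. simpl. rewrite Nat.eqb_refl. simpl.
  rewrite !filter_all, map_app, lprod_app; auto.
  - intros x Hx. apply in_seq in Hx. apply Bool.negb_true_iff, Nat.eqb_neq; lia.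
  - intros x Hx. apply in_seq in Hx. apply Bool.negb_true_iff, Nat.eqb_neq; lia.
Qed.

Definition Bc (r p : nat) : R := INR (fact (r - 2)) / (INR (fact p) * INR (fact (r - 2 - p))).

Lemma fact_pos_R n : 0 < INR (fact n).
Proof. apply lt_0_INR, lt_O_fact. Qed.

Lemma pe1 r i p : (p + 2 <= i <= r)%nat ->
  pure_entry r i p 1 = Bc r p * INR (i - S p) / INR (r - 1 - p).
Proof.
  intros H. unfold pure_entry, dseq.
  assert (Hl : Nat.ltb (S p) i = true) by (apply Nat.ltb_lt; lia). rewrite Hl.
  replace (S p - p)%nat with 1%nat by lia. simpl Nat.eqb. cbv iota.
  rewrite filter_split by lia.
  replace (r - 1 - S p)%nat with ((i - 2 - p) + (r - i))%nat by lia.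
  rewrite seq_app, map_app, lprod_app.
  replace (S p + (i - 2 - p))%nat with (i - 1)%nat by lia.
  rewrite (lprod_ext _ (fun l => / (INR p - INR l)) (seq 0 p)).
  2:{ intros l Hl'. apply in_seq in Hl'. assert (E: Nat.ltb (S l) i = true) by (apply Nat.ltb_lt; lia).
      rewrite E. f_equal. assert (INR l <= INR p) by (apply le_INR; lia).
      rewrite Rabs_left1; [|rewrite !S_INR; lra]. rewrite !S_INR; ring. }
  rewrite (lprod_ext _ (fun l => / (INR l + - INR p)) (seq (S p) (i - 2 - p))).
  2:{ intros l Hl'. apply in_seq in Hl'. assert (E: Nat.ltb (S l) i = true) by (apply Nat.ltb_lt; lia).
      rewrite E. f_equal. rewrite Rabs_pos_eq; [|rewrite !S_INR; assert (INR p <= INR l) by (apply le_INR; lia); lra].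
      rewrite !S_INR; ring. }
  rewrite (lprod_ext _ (fun l => / (INR l + (1 - INR p))) (seq (i - 1) (r - i))).
  2:{ intros l Hl'. apply in_seq in Hl'. assert (E: Nat.ltb (S l) i = false) by (apply Nat.ltb_ge; lia).
      rewrite E. f_equal. rewrite Rabs_pos_eq; [|rewrite !S_INR; assert (INR p <= INR l) by (apply le_INR; lia); lra].
      rewrite !S_INR; ring. }
  pose proof (LDg p 0 p ltac:(lia)) as A1.
  pose proof (LPg (S p) (i - 2 - p) (- INR p) 0 ltac:(rewrite S_INR; change (INR 0) with 0; lra)) as A2.
  pose proof (LPg (i - 1) (r - i) (1 - INR p) (i - S p)
     ltac:(rewrite !minus_INR by lia; rewrite !S_INR; change (INR 0) with 0; lra)) as A3.
  replace (p - 0 - p)%nat with 0%nat in A1 by lia. rewrite Nat.sub_0_r in A1.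
  replace (0 + (i - 2 - p))%nat with (i - 2 - p)%nat in A2 by lia.
  replace (i - S p + (r - i))%nat with (S (r - 2 - p))%nat in A3 by lia.
  simpl fact in A1, A2. simpl INR in A1, A2.
  unfold Bc.
  replace (i - S p)%nat with (S (i - 2 - p)) in A3 by lia.
  replace (r - 1 - p)%nat with (S (r - 2 - p)) by lia.
  replace (i - S p)%nat with (S (i - 2 - p)) by lia.
  rewrite !fact_simpl, !mult_INR in A3.
  pose proof (fact_pos_R p). pose proof (fact_pos_R (i - 2 - p)). pose proof (fact_pos_R (r - 2 - p)).
  pose proof (fact_pos_R (r-2)).
  assert (0 < INR (S (r - 2 - p))) by (apply lt_0_INR; lia).
  assert (0 < INR (S (i - 2 - p))) by (apply lt_0_INR; lia).
  set (X1 := lprod _) in A1 |- *. set (X2 := lprod (map _ (seq (S p) _))) in A2 |- *.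
  set (X3 := lprod (map _ (seq (i-1) _))) in A3 |- *.
  assert (X1 = / INR (fact p)) by (apply (Rmult_eq_reg_r (INR (fact p))); [rewrite A1; field|]; lra).
  assert (X2 = / INR (fact (i - 2 - p))) by (apply (Rmult_eq_reg_r (INR (fact (i-2-p)))); [rewrite A2; field|]; lra).
  assert (X3 = INR (S (i - 2 - p)) * INR (fact (i - 2 - p)) / (INR (S (r - 2 - p)) * INR (fact (r - 2 - p)))).
  { apply (Rmult_eq_reg_r (INR (S (r - 2 - p)) * INR (fact (r - 2 - p)))). rewrite A3. field. split; lra.
    apply Rgt_not_eq, Rmult_lt_0_compat; lra. }
  rewrite H6, H7, H8. field. repeat split; lra.
Qed.

Lemma pe2 r i p : (1 <= i <= S p)%nat -> (p + 2 <= r)%nat ->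
  pure_entry r i p 2 = Bc r p * INR (S (S p) - i) / INR (S p).
Proof.
  intros H Hr. unfold pure_entry, dseq.
  assert (Hl : Nat.ltb (S p) i = false) by (apply Nat.ltb_ge; lia). rewrite Hl.
  replace (S (S p) - p)%nat with 2%nat by lia. simpl Nat.eqb. cbv iota.
  rewrite filter_split by lia.
  assert (Es : seq 0 p = seq 0 (i - 1) ++ seq (i - 1) (p - (i - 1))).
  { replace p with ((i - 1) + (p - (i - 1)))%nat at 1 by lia. rewrite seq_app. reflexivity. }
  rewrite Es, map_app, lprod_app.
  rewrite (lprod_ext _ (fun l => / (INR (S p) - INR l)) (seq 0 (i - 1))).
  2:{ intros l Hl'. apply in_seq in Hl'. assert (E: Nat.ltb (S l) i = true) by (apply Nat.ltb_lt; lia).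
      rewrite E. f_equal. assert (INR l <= INR p) by (apply le_INR; lia).
      rewrite Rabs_left1; [|rewrite !S_INR; lra]. rewrite !S_INR; ring. }
  rewrite (lprod_ext _ (fun l => / (INR p - INR l)) (seq (i - 1) (p - (i - 1)))).
  2:{ intros l Hl'. apply in_seq in Hl'. assert (E: Nat.ltb (S l) i = false) by (apply Nat.ltb_ge; lia).
      rewrite E. f_equal. assert (INR l <= INR p) by (apply le_INR; lia).
      rewrite Rabs_left1; [|rewrite !S_INR; lra]. rewrite !S_INR; ring. }
  rewrite (lprod_ext _ (fun l => / (INR l + - INR p)) (seq (S p) (r - 1 - S p))).
  2:{ intros l Hl'. apply in_seq in Hl'. assert (E: Nat.ltb (S l) i = false) by (apply Nat.ltb_ge; lia).
      rewrite E. f_equal. rewrite Rabs_pos_eq; [|rewrite !S_INR; assert (INR p <= INR l) by (apply le_INR; lia); lra].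
      rewrite !S_INR; ring. }
  pose proof (LDg (S p) 0 (i - 1) ltac:(lia)) as A1.
  pose proof (LDg p (i - 1) (p - (i - 1)) ltac:(lia)) as A2.
  pose proof (LPg (S p) (r - 1 - S p) (- INR p) 0 ltac:(rewrite S_INR; change (INR 0) with 0; lra)) as A3.
  rewrite Nat.sub_0_r in A1. replace (S p - (i - 1))%nat with (S (S p - i)) in A1 by lia.
  replace (p - (i - 1) - (p - (i - 1)))%nat with 0%nat in A2 by lia.
  replace (p - (i - 1))%nat with (S p - i)%nat in A2 |- * by lia.
  replace (0 + (r - 1 - S p))%nat with (r - 2 - p)%nat in A3 by lia.
  replace (S (S p) - i)%nat with (S (S p - i)) by lia.
  unfold Bc. rewrite !fact_simpl, !mult_INR in A1.
  pose proof (fact_pos_R p). pose proof (fact_pos_R (S p - i)). pose proof (fact_pos_R (r - 2 - p)).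
  pose proof (fact_pos_R (r-2)).
  assert (0 < INR (S p)) by (apply lt_0_INR; lia).
  assert (0 < INR (S (S p - i))) by (apply lt_0_INR; lia).
  set (X1 := lprod (map _ (seq 0 _))) in A1 |- *. set (X2 := lprod (map _ (seq (i - 1) _))) in A2 |- *.
  set (X3 := lprod (map _ (seq (S p) _))) in A3 |- *.
  change (fact 0) with 1%nat in A2, A3; change (INR 1) with 1 in A2, A3.
  assert (X2 = / INR (fact (S p - i))) by (apply (Rmult_eq_reg_r (INR (fact (S p - i)))); [rewrite A2; field|]; lra).
  assert (X3 = / INR (fact (r - 2 - p))) by (apply (Rmult_eq_reg_r (INR (fact (r-2-p)))); [rewrite A3; field|]; lra).
  assert (X1 = INR (S (S p - i)) * INR (fact (S p - i)) / (INR (S p) * INR (fact p))).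
  { apply (Rmult_eq_reg_r (INR (S p) * INR (fact p))). rewrite A1. field. split; lra.
    apply Rgt_not_eq, Rmult_lt_0_compat; lra. }
  rewrite H6, H7, H8. field. repeat split; lra.
Qed.

Lemma pe1z r i p : (i <= S p)%nat -> pure_entry r i p 1 = 0.
Proof. intros H. unfold pure_entry, dseq.
  assert (Hl : Nat.ltb (S p) i = false) by (apply Nat.ltb_ge; lia). rewrite Hl.
  replace (S (S p) - p)%nat with 2%nat by lia. reflexivity. Qed.

Lemma pe2z r i p : (S (S p) <= i)%nat -> pure_entry r i p 2 = 0.
Proof. intros H. unfold pure_entry, dseq.
  assert (Hl : Nat.ltb (S p) i = true) by (apply Nat.ltb_lt; lia). rewrite Hl.
  replace (S p - p)%nat with 1%nat by lia. reflexivity. Qed.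

Definition X1 h r x p := lsum (map (fun i => h (INR i / INR r) * x i * INR (i - S p)) (seq 1 r)).
Definition X2 h r x p := lsum (map (fun i => h (INR i / INR r) * x i * INR (S (S p) - i)) (seq 1 r)).

Lemma betti1 h r x p : (p + 2 <= r)%nat ->
  betti_entry h r x p 1 = Bc r p / INR (r - 1 - p) * X1 h r x p.
Proof.
  intros Hr. unfold betti_entry, X1. unfold Rdiv at 1. rewrite <- lsum_scal.
  apply lsum_ext. intros i Hi. apply in_seq in Hi.
  destruct (le_lt_dec i (S p)).
  - rewrite pe1z by lia. replace (i - S p)%nat with 0%nat by lia. simpl. ring.
  - rewrite pe1 by lia. unfold Rdiv. ring.
Qed.

Lemma betti2 h r x p : (p + 2 <= r)%nat ->
  betti_entry h r x p 2 = Bc r p / INR (S p) * X2 h r x p.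
Proof.
  intros Hr. unfold betti_entry, X2. unfold Rdiv at 1. rewrite <- lsum_scal.
  apply lsum_ext. intros i Hi. apply in_seq in Hi.
  destruct (le_lt_dec i (S p)).
  - rewrite pe2 by lia. unfold Rdiv. ring.
  - rewrite pe2z by lia. replace (S (S p) - i)%nat with 0%nat by lia. simpl. ring.
Qed.

Lemma nat_arch x : exists N : nat, x < INR N.
Proof.
  destruct (archimed x) as [H _].
  destruct (Z_le_gt_dec (up x) 0).
  - exists 1%nat. apply IZR_le in l. simpl. lra.
  - exists (Z.to_nat (up x)). rewrite INR_IZR_INZ, Z2Nat.id by lia. lra.
Qed.

Lemma ln_le' x y : 0 < x -> x <= y -> ln x <= ln y.
Proof. intros H1 H2. destruct H2. left; apply ln_increasing; auto. subst; lra. Qed.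

Lemma cvext_ev (u v : nat -> R) l :
  (exists N, forall n, (N <= n)%nat -> u n = v n) -> Un_cv u l -> Un_cv v l.
Proof.
  intros [N HN] H eps He. destruct (H eps He) as [N1 HN1]. exists (max N N1).
  intros n Hn. rewrite <- HN by lia. apply HN1; lia.
Qed.

Lemma cvext (u v : nat -> R) l : (forall n, u n = v n) -> Un_cv u l -> Un_cv v l.
Proof. intros H. apply cvext_ev. exists 0%nat. auto. Qed.

Lemma cv_bounded (u : nat -> R) l : Un_cv u l -> exists K N, forall n, (N <= n)%nat -> Rabs (u n) <= K.
Proof.
  intros H. destruct (H 1 Rlt_0_1) as [N HN]. exists (Rabs l + 1), N. intros n Hn.
  specialize (HN n Hn). unfold R_dist in HN.
  pose proof (Rabs_triang (u n - l) l). replace (u n - l + l) with (u n) in H0 by ring. lra.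
Qed.

Lemma cv_squeeze0 (u v : nat -> R) :
  (exists N, forall n, (N <= n)%nat -> Rabs (u n) <= v n) -> Un_cv v 0 -> Un_cv u 0.
Proof.
  intros [N HN] H eps He. destruct (H eps He) as [N1 HN1]. exists (max N N1).
  intros n Hn. specialize (HN n ltac:(lia)). specialize (HN1 n ltac:(lia)).
  unfold R_dist in *. rewrite Rminus_0_r in *.
  pose proof (Rle_abs (v n)). lra.
Qed.

Lemma cv_0_iff (u : nat -> R) l : Un_cv (fun n => u n - l) 0 -> Un_cv u l.
Proof. intros H eps He. destruct (H eps He) as [N HN]. exists N. intros n Hn.
  specialize (HN n Hn). unfold R_dist in *. rewrite Rminus_0_r in HN. auto. Qed.

Lemma cv_to_0 (u : nat -> R) l : Un_cv u l -> Un_cv (fun n => u n - l) 0.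
Proof. intros H eps He. destruct (H eps He) as [N HN]. exists N. intros n Hn.
  specialize (HN n Hn). unfold R_dist in *. rewrite Rminus_0_r. auto. Qed.

Lemma cv_inv_sqrt : Un_cv (fun r => / sqrt (INR r)) 0.
Proof.
  intros eps He. destruct (nat_arch (/ eps ^ 2)) as [N HN]. exists (S N). intros n Hn.
  unfold R_dist. rewrite Rminus_0_r.
  assert (Hn' : INR N < INR n) by (apply lt_INR; lia).
  assert (0 < INR n) by (apply lt_0_INR; lia).
  assert (Hs : 0 < sqrt (INR n)) by (apply sqrt_lt_R0; auto).
  rewrite Rabs_pos_eq by (left; apply Rinv_0_lt_compat; auto).
  assert (/ eps < sqrt (INR n)).
  { rewrite <- (sqrt_Rsqr (/ eps)) by (left; apply Rinv_0_lt_compat; auto).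
    apply sqrt_lt_1_alt. split. apply Rle_0_sqr.
    replace (Rsqr (/ eps)) with (/ eps ^ 2) by (unfold Rsqr; field; lra). lra. }
  apply (Rmult_lt_reg_l (sqrt (INR n))); auto. rewrite Rinv_r by lra.
  apply (Rmult_lt_reg_l (/ eps)). apply Rinv_0_lt_compat; auto.
  replace (/ eps * (sqrt (INR n) * eps)) with (sqrt (INR n)) by (field; lra). lra.
Qed.

Lemma cv_inv_nat : Un_cv (fun r => / INR r) 0.
Proof.
  apply cv_squeeze0 with (v := fun r => / sqrt (INR r) * / sqrt (INR r)).
  - exists 1%nat. intros n Hn. assert (0 < INR n) by (apply lt_0_INR; lia).
    rewrite <- Rinv_mult, sqrt_sqrt by lra. rewrite Rabs_pos_eq; [lra|].
    left; apply Rinv_0_lt_compat; auto.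
  - replace 0 with (0 * 0) by ring. apply CV_mult; apply cv_inv_sqrt.
Qed.

Lemma cv_r_over_n : Un_cv (fun r => INR r / INR (r - 2)) 1.
Proof.
  apply cvext_ev with (u := fun r => 1 + 2 * / INR (r - 2)).
  - exists 3%nat. intros n Hn. rewrite minus_INR by lia.
    assert (INR 3 <= INR n) by (apply le_INR; lia). replace (INR 3) with 3 in H by (simpl; lra).
    replace (INR 2) with 2 by (simpl; lra). field. lra.
  - replace 1 with (1 + 2 * 0) at 1 by ring. apply CV_plus. intros e He; exists 0%nat; intros; unfold R_dist; rewrite Rminus_diag, Rabs_R0; lra.
    apply CV_mult. intros e He; exists 0%nat; intros; unfold R_dist; rewrite Rminus_diag, Rabs_R0; lra.
    intros e He. destruct (cv_inv_nat e He) as [N HN]. exists (N + 2)%nat. intros n Hn.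
    apply (HN (n - 2)%nat). lia.
Qed.

Lemma cv_const c : Un_cv (fun _ => c) c.
Proof. intros e He; exists 0%nat; intros; unfold R_dist; rewrite Rminus_diag, Rabs_R0; lra. Qed.

Lemma cv_shift2 (u : nat -> R) l : Un_cv u l -> Un_cv (fun r => u (r - 2)%nat) l.
Proof. intros H e He. destruct (H e He) as [N HN]. exists (N + 2)%nat. intros n Hn.
  apply (HN (n - 2)%nat). lia. Qed.

Lemma ln_le_sub1 y : 0 < y -> ln y <= y - 1.
Proof. intros H. rewrite <- (ln_exp (y - 1)). apply ln_le'; auto.
  pose proof (exp_ineq1_le (y - 1)). lra. Qed.

Lemma ln_bounds u : -1/2 <= u -> u - 2 * u ^ 2 <= ln (1 + u) <= u.
Proof.
  intros H. assert (Hp : 0 < 1 + u) by lra. split.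
  - pose proof (ln_le_sub1 (/ (1 + u)) ltac:(apply Rinv_0_lt_compat; auto)) as H0.
    rewrite ln_Rinv in H0 by auto.
    assert (/ (1 + u) - 1 = - u / (1 + u)) by (field; lra).
    assert (u / (1 + u) >= u - 2 * u ^ 2).
    { apply Rle_ge. apply (Rmult_le_reg_r (1 + u)); auto. unfold Rdiv.
      rewrite Rmult_assoc, Rinv_l by lra. nra. }
    unfold Rdiv in *. lra.
  - pose proof (ln_le_sub1 (1 + u) Hp). lra.
Qed.

Definition Bn (n j : nat) : R := INR (fact n) / (INR (fact j) * INR (fact (n - j))).
Lemma Bc_Bn r p : Bc r p = Bn (r - 2) p.
Proof. reflexivity. Qed.

Lemma Bn_pos n j : 0 < Bn n j.
Proof. unfold Bn. pose proof (fact_pos_R n). pose proof (fact_pos_R j). pose proof (fact_pos_R (n - j)).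
  apply Rdiv_lt_0_compat; auto. apply Rmult_lt_0_compat; auto. Qed.

Lemma Bn_succ n j : (j < n)%nat -> Bn n (S j) = Bn n j * INR (n - j) / INR (S j).
Proof.
  intros H. unfold Bn. replace (n - j)%nat with (S (n - S j)) by lia.
  rewrite !fact_simpl, !mult_INR.
  pose proof (fact_pos_R n). pose proof (fact_pos_R j). pose proof (fact_pos_R (n - S j)).
  assert (0 < INR (S j)) by (apply lt_0_INR; lia). assert (0 < INR (S (n - S j))) by (apply lt_0_INR; lia).
  field. repeat split; lra.
Qed.

Lemma Bn_sym n j : (j <= n)%nat -> Bn n (n - j) = Bn n j.
Proof. intros H. unfold Bn. replace (n - (n - j))%nat with j by lia. rewrite (Rmult_comm (INR (fact (n - j)))). reflexivity. Qed.

Lemma core_binom n c (D : R) :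
  (n <= 2 * c + 2)%nat -> 1 <= D -> 4 * D <= INR n ->
  forall k, (c + k <= n)%nat ->
  (forall j, (c <= j < c + k)%nat -> Rabs (2 * INR j + 1 - INR n) <= D) ->
  Rabs (ln (Bn n (c + k) / Bn n c) + 2 * (INR (c + k) - INR c) * (INR (c + k) + INR c - INR n) / INR n)
    <= INR k * (12 * D ^ 2 / INR n ^ 2).
Proof.
  intros Hc HD HDn. assert (Hn : 0 < INR n) by lra.
  induction k; intros Hk Hj.
  - rewrite Nat.add_0_r. unfold Rdiv. rewrite Rinv_r by (apply Rgt_not_eq, Bn_pos).
    rewrite ln_1. simpl. replace (0 + 2 * (INR c - INR c) * (INR c + INR c - INR n) * / INR n) with 0 by ring.
    rewrite Rabs_R0. lra.
  - set (j := (c + k)%nat). replace (c + S k)%nat with (S j) by (unfold j; lia).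
    assert (Hjn : (j < n)%nat) by (unfold j; lia).
    pose proof (IHk ltac:(lia) (fun j' H' => Hj j' ltac:(lia))) as IH. fold j in IH.
    assert (Hw : Rabs (2 * INR j + 1 - INR n) <= D) by (apply Hj; unfold j; lia).
    rewrite Bn_succ by auto.
    assert (HJ : INR n / 2 <= INR j + 1).
    { assert (INR n <= INR (2 * c + 2)) by (apply le_INR; lia).
      assert (INR c <= INR j) by (apply le_INR; unfold j; lia).
      rewrite plus_INR, mult_INR in H. simpl in H. lra. }
    assert (Hnj : INR (n - j) = INR n - INR j) by (apply minus_INR; lia).
    rewrite Hnj, S_INR.
    assert (HBj := Bn_pos n j). assert (HBc := Bn_pos n c).
    assert (Hpos : 0 < (INR n - INR j) / (INR j + 1)).
    { assert (INR j < INR n) by (apply lt_INR; auto). apply Rdiv_lt_0_compat; lra. }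
    replace (Bn n j * (INR n - INR j) / (INR j + 1) / Bn n c) with
      ((Bn n j / Bn n c) * ((INR n - INR j) / (INR j + 1))) by (field; lra).
    rewrite ln_mult by (auto; apply Rdiv_lt_0_compat; auto).
    set (u := (INR n - INR j) / (INR j + 1) - 1).
    replace ((INR n - INR j) / (INR j + 1)) with (1 + u) by (unfold u; ring).
    set (w := 2 * INR j + 1 - INR n) in Hw.
    assert (Hu : u = - w / (INR j + 1)) by (unfold u, w; field; lra).
    assert (Hua : Rabs u <= 2 * D / INR n).
    { rewrite Hu. unfold Rdiv. rewrite Rabs_mult, Rabs_Ropp, Rabs_inv, (Rabs_pos_eq (INR j + 1)) by lra.
      assert (/ (INR j + 1) <= 2 / INR n).
      { replace (2 / INR n) with (/ (INR n / 2)) by (field; lra).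
        apply Rinv_le_contravar; lra. }
      apply Rle_trans with (D * (2 / INR n)).
      apply Rmult_le_compat; auto. apply Rabs_pos. left; apply Rinv_0_lt_compat; lra.
      right; unfold Rdiv; ring. }
    assert (HDn' : 2 * D / INR n <= 1/2).
    { apply (Rmult_le_reg_r (INR n)); auto. unfold Rdiv. rewrite Rmult_assoc, Rinv_l by lra. lra. }
    assert (Hu2 : u ^ 2 <= 4 * D ^ 2 / INR n ^ 2).
    { replace (4 * D ^ 2 / INR n ^ 2) with ((2 * D / INR n) ^ 2) by (field; lra).
      rewrite <- (pow2_abs u). apply pow_incr. split; [apply Rabs_pos|auto]. }
    assert (Hub : -1/2 <= u) by (pose proof (Rle_abs (- u)); rewrite Rabs_Ropp in H; lra).
    pose proof (ln_bounds u Hub) as Hln.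
    assert (HB : Rabs (u + 2 * w / INR n) <= 4 * D ^ 2 / INR n ^ 2).
    { replace (u + 2 * w / INR n) with (w * (w + 1) / (INR n * (INR j + 1))) by (rewrite Hu; unfold w; field; lra).
      unfold Rdiv. rewrite !Rabs_mult, Rabs_inv, (Rabs_pos_eq (INR n * (INR j + 1))) by (apply Rmult_le_pos; lra).
      assert (Rabs (w + 1) <= 2 * D) by (pose proof (Rabs_triang w 1); rewrite Rabs_R1 in H; lra).
      assert (INR n * (INR n / 2) <= INR n * (INR j + 1)) by (apply Rmult_le_compat_l; lra).
      assert (/ (INR n * (INR j + 1)) <= 2 / INR n ^ 2).
      { replace (2 / INR n ^ 2) with (/ (INR n * (INR n / 2))) by (field; lra).
        apply Rinv_le_contravar; auto. apply Rmult_lt_0_compat; lra. }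
      apply Rle_trans with (D * (2 * D) * (2 / INR n ^ 2)).
      apply Rmult_le_compat; try (apply Rmult_le_pos; apply Rabs_pos); try (left; apply Rinv_0_lt_compat, Rmult_lt_0_compat; lra); auto.
      apply Rmult_le_compat; try apply Rabs_pos; auto.
      right; field; lra. }
    rewrite S_INR.
    replace (ln (Bn n j / Bn n c) + ln (1 + u) + 2 * (INR j + 1 - INR c) * (INR j + 1 + INR c - INR n) / INR n)
      with ((ln (Bn n j / Bn n c) + 2 * (INR j - INR c) * (INR j + INR c - INR n) / INR n)
            + ((ln (1 + u) - u) + (u + 2 * w / INR n))) by (unfold w; field; lra).
    eapply Rle_trans; [apply Rabs_triang|].
    eapply Rle_trans; [apply Rplus_le_compat; [apply IH|apply Rabs_triang]|].
    assert (Rabs (ln (1 + u) - u) <= 8 * D ^ 2 / INR n ^ 2).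
    { apply Rabs_le. split; nra. }
    lra.
Qed.

Definition mid (r : nat) : nat := (r / 2)%nat.
Lemma mid_bounds r : (2 * mid r <= r <= 2 * mid r + 1)%nat.
Proof. unfold mid. pose proof (Nat.div_mod r 2 ltac:(lia)). pose proof (Nat.mod_upper_bound r 2 ltac:(lia)). lia. Qed.

Lemma ratio_err r p : (2 <= r)%nat -> (p <= r - 2)%nat ->
  let n := (r - 2)%nat in let m := mid r in
  let D := Rabs (2 * INR p - INR r) + 4 in
  4 * D <= INR n ->
  Rabs (ln (Bc r p / Bc r m) + 2 * (INR p - INR m) * (INR p + INR m - INR n) / INR n)
    <= 12 * D ^ 3 / INR n ^ 2.
Proof.
  intros Hr Hp n m D HD. rewrite !Bc_Bn. fold n.
  pose proof (mid_bounds r) as Hm. fold m in Hm.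
  assert (HD1 : 1 <= D) by (unfold D; pose proof (Rabs_pos (2 * INR p - INR r)); lra).
  assert (Hn : 0 < INR n) by lra.
  assert (Hyl := Rle_abs (2 * INR p - INR r)). assert (Hyr := Rle_abs (- (2 * INR p - INR r))).
  rewrite Rabs_Ropp in Hyr. assert (HDd : D = Rabs (2 * INR p - INR r) + 4) by reflexivity.
  assert (HnR : INR n = INR r - 2) by (unfold n; rewrite minus_INR by lia; simpl; lra).
  assert (Hm2 : 2 * INR m <= INR r <= 2 * INR m + 1).
  { split. replace (2 * INR m) with (INR (2 * m)) by (rewrite mult_INR; simpl; lra). apply le_INR; lia.
    replace (2 * INR m + 1) with (INR (2 * m + 1)) by (rewrite plus_INR, mult_INR; simpl; lra). apply le_INR; lia. }
  assert (Hn16 : (16 <= n)%nat).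
  { apply INR_le. replace (INR 16) with 16 by (simpl; lra). lra. }
  destruct (le_lt_dec m p) as [Hmp | Hmp].
  - pose proof (core_binom n m D ltac:(lia) HD1 HD (p - m) ltac:(unfold n in *; lia)) as C.
    replace (m + (p - m))%nat with p in C by lia.
    assert (Hk : INR (p - m) <= D).
    { rewrite minus_INR by lia. lra. }
    eapply Rle_trans; [apply C|].
    + intros j Hj. assert (INR m <= INR j) by (apply le_INR; lia).
      assert (INR j + 1 <= INR p) by (rewrite <- S_INR; apply le_INR; lia).
      apply Rabs_le. lra.
    + replace (12 * D ^ 3 / INR n ^ 2) with (D * (12 * D ^ 2 / INR n ^ 2)) by (field; lra).
      apply Rmult_le_compat_r; auto. apply Rmult_le_pos. nra. left; apply Rinv_0_lt_compat; nra.
  - assert (Hmn : (m <= n)%nat) by (unfold n in *; lia).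
    rewrite <- (Bn_sym n p) by (unfold n in *; lia). rewrite <- (Bn_sym n m) by auto.
    pose proof (core_binom n (n - m) D ltac:(lia) HD1 HD (m - p) ltac:(unfold n in *; lia)) as C.
    replace (n - m + (m - p))%nat with (n - p)%nat in C by (unfold n in *; lia).
    assert (Hk : INR (m - p) <= D).
    { rewrite minus_INR by lia. lra. }
    assert (Hmain : 2 * (INR (n - p) - INR (n - m)) * (INR (n - p) + INR (n - m) - INR n) / INR n
                    = 2 * (INR p - INR m) * (INR p + INR m - INR n) / INR n).
    { rewrite !minus_INR by (unfold n in *; lia). field. lra. }
    rewrite <- Hmain.
    eapply Rle_trans; [apply C|].
    + intros j Hj. assert (INR (n - m) <= INR j) by (apply le_INR; lia).
      assert (INR j + 1 <= INR (n - p)) by (rewrite <- S_INR; apply le_INR; lia).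
      rewrite !minus_INR in * by (unfold n in *; lia).
      apply Rabs_le. lra.
    + replace (12 * D ^ 3 / INR n ^ 2) with (D * (12 * D ^ 2 / INR n ^ 2)) by (field; lra).
      apply Rmult_le_compat_r; auto. apply Rmult_le_pos. nra. left; apply Rinv_0_lt_compat; nra.
Qed.

Lemma sqrt_ge_of_sq x t : 0 <= t -> t ^ 2 <= x -> t <= sqrt x.
Proof. intros Ht H. rewrite <- (sqrt_pow2 t Ht). apply sqrt_le_1_alt. auto. Qed.

Lemma cv_bounded1 (u : nat -> R) l : Un_cv u l -> exists K N, 1 <= K /\ forall n, (N <= n)%nat -> Rabs (u n) <= K.
Proof. intros H. destruct (cv_bounded u l H) as [K [N HN]]. exists (Rmax K 1), N. split. apply Rmax_r.
  intros n Hn. eapply Rle_trans; [apply HN; auto|apply Rmax_l]. Qed.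

Lemma cv_scal (u : nat -> R) c l : Un_cv u l -> Un_cv (fun n => c * u n) (c * l).
Proof. intros H. apply CV_mult; auto. apply cv_const. Qed.

Section BinomLim.
Variable p : nat -> nat.
Variable a : R.
Hypothesis Hp : forall r, (2 <= r)%nat -> (p r <= r - 2)%nat.
Hypothesis Ha : Un_cv (fun r => (2 * INR (p r) - INR r) / sqrt (INR r)) a.

Let y r := 2 * INR (p r) - INR r.
Let s r := (2 * INR (p r) - INR r) / sqrt (INR r).

Lemma y_eq r : (1 <= r)%nat -> y r = s r * sqrt (INR r).
Proof. intros H. unfold y, s. assert (0 < sqrt (INR r)) by (apply sqrt_lt_R0, lt_0_INR; lia). field. lra. Qed.

Lemma y_bound : exists K N, 1 <= K /\ (2 <= N)%nat /\ forall r, (N <= r)%nat ->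
  Rabs (y r) <= K * sqrt (INR r) /\ 4 * (Rabs (y r) + 4) <= INR (r - 2) /\ 1 <= sqrt (INR r)
  /\ INR r / 2 <= INR (r - 2).
Proof.
  destruct (cv_bounded1 s a Ha) as [K [N0 [HK HN0]]].
  destruct (nat_arch ((8 * K + 36) ^ 2)) as [N1 HN1].
  exists K, (N0 + N1 + 2)%nat. split; auto. split; [lia|]. intros r Hr.
  assert (Hr1 : (1 <= r)%nat) by lia.
  assert (Hrr : INR (N1) <= INR r) by (apply le_INR; lia).
  assert (Hsq : 8 * K + 36 <= sqrt (INR r)) by (apply sqrt_ge_of_sq; lra).
  assert (Hs0 : 0 <= sqrt (INR r)) by apply sqrt_pos.
  assert (Hss : sqrt (INR r) * sqrt (INR r) = INR r) by (apply sqrt_sqrt, pos_INR).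
  assert (Hyb : Rabs (y r) <= K * sqrt (INR r)).
  { rewrite y_eq by auto. rewrite Rabs_mult, (Rabs_pos_eq (sqrt _)) by auto.
    apply Rmult_le_compat_r; auto. apply HN0; lia. }
  assert (HnR : INR (r - 2) = INR r - 2) by (rewrite minus_INR by lia; simpl; lra).
  assert (Hq : sqrt (INR r) * (8 * K + 36) <= sqrt (INR r) * sqrt (INR r)) by (apply Rmult_le_compat_l; lra).
  split; auto. split; [|split]. 
  - rewrite HnR. nra.
  - lra.
  - rewrite HnR. nra.
Qed.

Lemma err_cv : Un_cv (fun r => ln (Bc r (p r) / Bc r (mid r)) +
   2 * (INR (p r) - INR (mid r)) * (INR (p r) + INR (mid r) - INR (r - 2)) / INR (r - 2)) 0.
Proof.
  destruct y_bound as [K [N [HK [HN HB]]]].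
  apply cv_squeeze0 with (v := fun r => (12 * (K + 4) ^ 3 * 4) * / sqrt (INR r)).
  - exists N. intros r Hr. destruct (HB r Hr) as [H1 [H2 [H3 H4]]].
    eapply Rle_trans; [apply ratio_err; [lia|apply Hp; lia|exact H2]|].
    change (y r) with (2 * INR (p r) - INR r) in H1.
    set (D := Rabs (2 * INR (p r) - INR r) + 4). set (n := INR (r - 2)) in *. set (q := sqrt (INR r)) in *.
    assert (HD : D <= (K + 4) * q) by (unfold D; nra).
    assert (HD0 : 0 <= D) by (unfold D; pose proof (Rabs_pos (2 * INR (p r) - INR r)); lra).
    assert (Hq2 : q * q = INR r) by (apply sqrt_sqrt, pos_INR).
    assert (Hn : q * q / 2 <= n) by (rewrite Hq2; auto).
    assert (Hq0 : 0 < q) by lra.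
    assert (D ^ 3 <= ((K + 4) * q) ^ 3) by (apply pow_incr; auto).
    assert (Hnpos : 0 < n) by nra.
    apply Rle_trans with (12 * ((K + 4) * q) ^ 3 / (q * q / 2) ^ 2).
    + unfold Rdiv. apply Rmult_le_compat.
      apply Rmult_le_pos; [lra| apply pow_le; auto].
      left. apply Rinv_0_lt_compat. nra. lra.
      assert (0 < q * q / 2) by nra.
      apply Rinv_le_contravar. apply pow_lt; auto. apply pow_incr. lra.
    + right. field. lra.
  - replace 0 with ((12 * (K + 4) ^ 3 * 4) * 0) by ring. apply cv_scal, cv_inv_sqrt.
Qed.

Lemma main_cv : Un_cv (fun r => - (2 * (INR (p r) - INR (mid r)) * (INR (p r) + INR (mid r) - INR (r - 2)) / INR (r - 2)))
   (- a ^ 2 / 2).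
Proof.
  set (e := fun r => INR r - 2 * INR (mid r)).
  apply cvext_ev with (u := fun r => - (s r * s r / 2) * (INR r / INR (r - 2))
     - 2 * s r * (/ sqrt (INR r) * (INR r / INR (r - 2))) - (e r * (4 - e r) / 2) * / INR (r - 2)).
  - exists 3%nat. intros r Hr. 
    assert (HnR : INR (r - 2) = INR r - 2) by (rewrite minus_INR by lia; simpl; lra).
    assert (INR 3 <= INR r) by (apply le_INR; lia). replace (INR 3) with 3 in H by (simpl; lra).
    assert (0 < sqrt (INR r)) by (apply sqrt_lt_R0; lra).
    assert (Hss : sqrt (INR r) * sqrt (INR r) = INR r) by (apply sqrt_sqrt; lra).
    unfold s, e. rewrite HnR. set (q := sqrt (INR r)) in *. rewrite <- Hss. field. split; nra.
  - replace (- a ^ 2 / 2) with (- (a * a / 2) * 1 - 2 * a * (0 * 1) - 0) by field.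
    assert (Hs : Un_cv s a) by exact Ha.
    apply CV_minus. apply CV_minus.
    + apply CV_mult; [|apply cv_r_over_n].
      replace (- (a * a / 2)) with ((- / 2) * (a * a)) by field.
      apply cvext with (u := fun r => (- / 2) * (s r * s r)). intros; field.
      apply cv_scal. apply CV_mult; auto.
    + apply CV_mult. apply cv_scal; auto. apply CV_mult; [apply cv_inv_sqrt|apply cv_r_over_n].
    + apply cv_squeeze0 with (v := fun r => 2 * / INR (r - 2)).
      * exists 3%nat. intros r Hr. pose proof (mid_bounds r) as Hm.
        assert (He : 0 <= e r <= 1).
        { unfold e. assert (INR (2 * mid r) <= INR r) by (apply le_INR; lia).
          assert (INR r <= INR (2 * mid r + 1)) by (apply le_INR; lia).
          rewrite plus_INR, mult_INR in *. simpl in *. lra. }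
        assert (0 < INR (r - 2)) by (apply lt_0_INR; lia).
        rewrite Rabs_mult, Rabs_pos_eq by nra. rewrite Rabs_pos_eq by (left; apply Rinv_0_lt_compat; auto).
        apply Rmult_le_compat_r. left; apply Rinv_0_lt_compat; auto. nra.
      * replace 0 with (2 * 0) by ring. apply cv_scal. apply cv_shift2 with (u := fun r => / INR r), cv_inv_nat.
Qed.
End BinomLim.

Lemma binom_lim (p : nat -> nat) a :
  (forall r, (2 <= r)%nat -> (p r <= r - 2)%nat) ->
  Un_cv (fun r => (2 * INR (p r) - INR r) / sqrt (INR r)) a ->
  Un_cv (fun r => Bc r (p r) / Bc r (mid r)) (exp (- a ^ 2 / 2)).
Proof.
  intros Hp Ha.
  assert (Hl : Un_cv (fun r => ln (Bc r (p r) / Bc r (mid r))) (- a ^ 2 / 2)).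
  { pose proof (CV_plus _ _ _ _ (err_cv p a Hp Ha) (main_cv p a Ha)) as H.
    rewrite Rplus_0_l in H. eapply cvext; [|exact H]. intros r. simpl. ring. }
  pose proof (continuity_seq exp _ _ (derivable_continuous_pt _ _ (derivable_pt_exp _)) Hl) as H.
  eapply cvext; [|exact H]. intros r. simpl. apply exp_ln.
  rewrite !Bc_Bn. apply Rdiv_lt_0_compat; apply Bn_pos.
Qed.

Lemma lsum_flat_map {A B} (f : B -> R) (g : A -> list B) l :
  lsum (map f (flat_map g l)) = lsum (map (fun x => lsum (map f (g x))) l).
Proof. induction l; simpl; auto. rewrite map_app, lsum_app, IHl. reflexivity. Qed.

Lemma lsum_map_map {A B} (f : B -> R) (g : A -> B) l : lsum (map f (map g l)) = lsum (map (fun x => f (g x)) l).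
Proof. rewrite map_map. reflexivity. Qed.

Lemma lsum_rev_seq (f : nat -> R) M : lsum (map f (seq 0 M)) = lsum (map (fun j => f (M - 1 - j)%nat) (seq 0 M)).
Proof.
  induction M; auto.
  rewrite seq_S at 1. rewrite map_app, lsum_app, IHM.
  change (seq 0 (S M)) with (0%nat :: seq 1 M). rewrite <- seq_shift.
  cbn [map lsum fold_right]. rewrite map_map. fold lsum.
  replace (S M - 1 - 0)%nat with M by lia. replace (0 + M)%nat with M by lia.
  unfold lsum in *. rewrite (lsum_ext (fun x => f (S M - 1 - S x)%nat) (fun j => f (M - 1 - j)%nat)) by (intros; f_equal; lia).
  unfold lsum. ring.
Qed.

Section Grid.
Variable M : nat.
Hypothesis HM : (1 <= M)%nat.

Definition zj (j : nat) : R := (INR j + 1/2) / INR M - 1/2.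

Lemma HMpos : 0 < INR M.
Proof. apply lt_0_INR; lia. Qed.

Lemma zj_sym j : (j < M)%nat -> zj (M - 1 - j) = - zj j.
Proof. intros H. unfold zj. pose proof HMpos. rewrite !minus_INR by lia. simpl. field. lra. Qed.

Lemma zj_bound j : (j < M)%nat -> Rabs (zj j) <= 1/2.
Proof. intros H. unfold zj. pose proof HMpos.
  assert (INR j + 1 <= INR M) by (rewrite <- S_INR; apply le_INR; lia).
  assert (0 <= INR j) by apply pos_INR.
  apply Rabs_le. split.
  - apply Rle_trans with (0 - 1/2); [lra|]. apply Rplus_le_compat_r. apply Rlt_le, Rdiv_lt_0_compat; lra.
  - apply Rle_trans with (1 - 1/2); [|lra]. apply Rplus_le_compat_r.
    apply (Rmult_le_reg_r (INR M)); auto. unfold Rdiv. rewrite Rmult_assoc, Rinv_l; lra.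
Qed.

Lemma sum_odd (k : nat) : Nat.odd k = true -> lsum (map (fun j => zj j ^ k) (seq 0 M)) = 0.
Proof.
  intros Hk. pose proof (lsum_rev_seq (fun j => zj j ^ k) M) as H.
  rewrite (lsum_ext (fun j => zj (M - 1 - j) ^ k) (fun j => - (zj j ^ k))) in H.
  - assert (E: forall l, lsum (map (fun j => - (zj j ^ k)) l) = - lsum (map (fun j => zj j ^ k) l)).
    { intros l. rewrite (lsum_ext _ (fun j => -1 * (zj j ^ k))) by (intros; ring).
      rewrite lsum_scal. ring. }
    rewrite E in H. lra.
  - intros j Hj. apply in_seq in Hj. rewrite zj_sym by lia.
    apply Nat.odd_spec in Hk. destruct Hk as [q Hq]. subst k.
    rewrite !pow_add, !pow_mult. replace ((- zj j) ^ 2) with (zj j ^ 2) by ring. ring.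
Qed.

Lemma sum_z1 : lsum (map zj (seq 0 M)) = 0.
Proof. rewrite <- (sum_odd 1) by reflexivity. apply lsum_ext. intros; ring. Qed.
Lemma sum_z3 : lsum (map (fun j => zj j ^ 3) (seq 0 M)) = 0.
Proof. apply sum_odd. reflexivity. Qed.
Lemma sum_z2 : lsum (map (fun j => zj j ^ 2) (seq 0 M)) <= INR M / 4.
Proof. replace (INR M / 4) with (INR (length (seq 0 M)) * (1/4)) by (rewrite length_seq; field).
  rewrite <- lsum_const. apply lsum_le. intros j Hj. apply in_seq in Hj.
  pose proof (zj_bound j ltac:(lia)). rewrite <- pow2_abs.
  assert (0 <= Rabs (zj j)) by apply Rabs_pos. nra. Qed.
Lemma sum_z4 : lsum (map (fun j => zj j ^ 4) (seq 0 M)) <= INR M / 16.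
Proof. replace (INR M / 16) with (INR (length (seq 0 M)) * (1/16)) by (rewrite length_seq; field).
  rewrite <- lsum_const. apply lsum_le. intros j Hj. apply in_seq in Hj.
  pose proof (zj_bound j ltac:(lia)). replace (zj j ^ 4) with ((Rabs (zj j)) ^ 2 * (Rabs (zj j)) ^ 2) by (rewrite pow2_abs; ring).
  assert (0 <= Rabs (zj j)) by apply Rabs_pos.
  assert (Rabs (zj j) ^ 2 <= 1/4) by (simpl; nra). assert (0 <= Rabs (zj j) ^ 2) by apply pow2_ge_0. nra. Qed.

Fixpoint digits (n : nat) : list (list nat) :=
  match n with
  | O => [[]]
  | S n => flat_map (fun ds => map (fun j => ds ++ [j]) (seq 0 M)) (digits n)
  end.

Lemma digits_spec n ds : In ds (digits n) -> length ds = n /\ forall d, In d ds -> (d < M)%nat.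
Proof.
  revert ds. induction n; simpl; intros ds H.
  - destruct H as [<-|[]]. simpl. split; auto. intros d [].
  - apply in_flat_map in H. destruct H as [ds' [H1 H2]]. apply in_map_iff in H2.
    destruct H2 as [j [<- Hj]]. apply in_seq in Hj. destruct (IHn ds' H1) as [Hl Hd].
    rewrite length_app, Hl. simpl. split; [lia|]. intros d Hd'. apply in_app_or in Hd'.
    destruct Hd' as [Hd'|[<-|[]]]; auto. lia.
Qed.

Lemma digits_length n : length (digits n) = (M ^ n)%nat.
Proof.
  induction n; simpl; auto.
  rewrite flat_map_concat_map, length_concat, map_map.
  rewrite (map_ext_in _ (fun _ => M)).
  - rewrite <- IHn. generalize (digits n). intros l. induction l; simpl; auto. lia.
  - intros. rewrite length_map, length_seq. auto.
Qed.

Definition cen (ds : list nat) (i : nat) : R := (INR (nth (i - 1) ds 0%nat) + 1/2) / INR M.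

Variable a : nat -> R.
Definition Sg (n : nat) (ds : list nat) : R := lsum (map (fun i => a i * (cen ds i - 1/2)) (seq 1 n)).
Definition T2 (n : nat) : R := lsum (map (fun i => a i ^ 2) (seq 1 n)).

Lemma Sg_step n ds j : length ds = n -> Sg (S n) (ds ++ [j]) = Sg n ds + a (S n) * zj j.
Proof.
  intros Hl. unfold Sg. rewrite seq_S, map_app, lsum_app. simpl.
  f_equal.
  - apply lsum_ext. intros i Hi. apply in_seq in Hi. unfold cen. rewrite app_nth1 by lia. reflexivity.
  - unfold cen, zj. replace (S n - 1)%nat with n by lia. rewrite app_nth2 by lia. rewrite Hl, Nat.sub_diag. simpl. ring.
Qed.

Lemma T2_ge0 n : 0 <= T2 n.
Proof. apply lsum_ge0. intros. apply pow2_ge_0. Qed.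

Lemma moment2 n : lsum (map (fun ds => Sg n ds ^ 2) (digits n)) <= INR M ^ n * T2 n / 4.
Proof.
  induction n.
  - simpl. unfold Sg. simpl. unfold T2; simpl. lra.
  - simpl digits. rewrite lsum_flat_map.
    set (b := a (S n)).
    rewrite (lsum_ext _ (fun ds => INR M * Sg n ds ^ 2 + b ^ 2 * lsum (map (fun j => zj j ^ 2) (seq 0 M)))).
    2:{ intros ds Hds. destruct (digits_spec n ds Hds) as [Hl _]. rewrite map_map.
        rewrite (lsum_ext _ (fun j => Sg n ds ^ 2 + ((2 * Sg n ds * b) * zj j + b ^ 2 * zj j ^ 2))).
        2:{ intros j _. rewrite Sg_step by auto. unfold b. ring. }
        rewrite !lsum_plus, !lsum_scal, sum_z1, lsum_const, length_seq. ring. }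
    rewrite lsum_plus, lsum_scal, lsum_const, digits_length.
    unfold T2. rewrite seq_S, map_app, lsum_app. fold (T2 n).
    replace (lsum (map (fun i => a i ^ 2) [(1 + n)%nat])) with (b ^ 2) by (unfold lsum, b; simpl; ring).
    pose proof sum_z2. pose proof HMpos. rewrite pow_INR. change (INR M ^ S n) with (INR M * INR M ^ n).
    assert (0 <= INR M ^ n) by (apply pow_le; lra).
    assert (0 <= b ^ 2) by apply pow2_ge_0.
    apply Rle_trans with (INR M * (INR M ^ n * T2 n / 4) + INR M ^ n * (b ^ 2 * (INR M / 4))).
    + apply Rplus_le_compat. apply Rmult_le_compat_l; lra. apply Rmult_le_compat_l; auto. apply Rmult_le_compat_l; auto.
    + unfold b. right. field.
Qed.

Lemma moment4 n : lsum (map (fun ds => Sg n ds ^ 4) (digits n)) <= INR M ^ n * T2 n ^ 2.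
Proof.
  induction n.
  - simpl. unfold Sg. simpl. unfold T2; simpl. lra.
  - simpl digits. rewrite lsum_flat_map.
    set (b := a (S n)).
    rewrite (lsum_ext _ (fun ds => INR M * Sg n ds ^ 4 + (6 * b ^ 2 * lsum (map (fun j => zj j ^ 2) (seq 0 M))) * Sg n ds ^ 2
                          + b ^ 4 * lsum (map (fun j => zj j ^ 4) (seq 0 M)))).
    2:{ intros ds Hds. destruct (digits_spec n ds Hds) as [Hl _]. rewrite map_map.
        rewrite (lsum_ext _ (fun j => Sg n ds ^ 4 + ((4 * Sg n ds ^ 3 * b) * zj j + ((6 * Sg n ds ^ 2 * b ^ 2) * zj j ^ 2
             + ((4 * Sg n ds * b ^ 3) * zj j ^ 3 + b ^ 4 * zj j ^ 4))))).
        2:{ intros j _. rewrite Sg_step by auto. unfold b. ring. }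
        rewrite !lsum_plus, !lsum_scal, sum_z1, sum_z3, lsum_const, length_seq. ring. }
    rewrite !lsum_plus, !lsum_scal, lsum_const, digits_length.
    pose proof (moment2 n) as M2.
    unfold T2. rewrite seq_S, map_app, lsum_app. fold (T2 n).
    replace (lsum (map (fun i => a i ^ 2) [(1 + n)%nat])) with (b ^ 2) by (unfold lsum, b; simpl; ring).
    pose proof sum_z2. pose proof sum_z4. pose proof HMpos. rewrite pow_INR. change (INR M ^ S n) with (INR M * INR M ^ n).
    assert (0 <= INR M ^ n) by (apply pow_le; lra).
    assert (0 <= b ^ 2) by apply pow2_ge_0.
    assert (0 <= b ^ 4) by (replace (b ^ 4) with ((b ^ 2) ^ 2) by ring; apply pow2_ge_0).
    pose proof (T2_ge0 n).
    assert (0 <= lsum (map (fun j => zj j ^ 2) (seq 0 M))) by (apply lsum_ge0; intros; apply pow2_ge_0).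
    apply Rle_trans with (INR M * (INR M ^ n * T2 n ^ 2) + 6 * b ^ 2 * (INR M / 4) * (INR M ^ n * T2 n / 4)
                          + INR M ^ n * (b ^ 4 * (INR M / 16))).
    + apply Rplus_le_compat. apply Rplus_le_compat.
      * apply Rmult_le_compat_l; lra.
      * apply Rmult_le_compat; try lra. apply Rmult_le_pos; lra. apply lsum_ge0; intros; apply pow2_ge_0.
        apply Rmult_le_compat_l; lra.
      * rewrite <- Rmult_assoc, (Rmult_comm (b ^ 4)), Rmult_assoc. apply Rmult_le_compat_l; auto. apply Rmult_le_compat_l; auto.
    + replace (b ^ 4) with (b ^ 2 * b ^ 2) by ring.
      assert (0 <= INR M ^ n * INR M * T2 n * b ^ 2) by (apply Rmult_le_pos; [apply Rmult_le_pos; [apply Rmult_le_pos|]|]; lra).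
      assert (0 <= INR M ^ n * INR M * b ^ 2 * b ^ 2) by (apply Rmult_le_pos; [apply Rmult_le_pos; [apply Rmult_le_pos|]|]; lra).
      replace (INR M * (INR M ^ n * T2 n ^ 2) + 6 * b ^ 2 * (INR M / 4) * (INR M ^ n * T2 n / 4) +
               INR M ^ n * (b ^ 2 * b ^ 2 * (INR M / 16)))
        with (INR M ^ n * INR M * T2 n ^ 2 + 3/8 * (INR M ^ n * INR M * T2 n * b ^ 2) + 1/16 * (INR M ^ n * INR M * b ^ 2 * b ^ 2)) by field.
      replace (INR M * INR M ^ n * (T2 n + b ^ 2) ^ 2)
        with (INR M ^ n * INR M * T2 n ^ 2 + 2 * (INR M ^ n * INR M * T2 n * b ^ 2) + (INR M ^ n * INR M * b ^ 2 * b ^ 2)) by ring.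
      lra.
Qed.
End Grid.

Lemma lsum_minus {A} (f g : A -> R) l :
  lsum (map f l) - lsum (map g l) = lsum (map (fun x => f x - g x) l).
Proof. induction l; simpl; [ring|rewrite <- IHl; ring]. Qed.

Lemma lprod_const {A} c (l : list A) : lprod (map (fun _ => c) l) = c ^ length l.
Proof. induction l; simpl; auto. rewrite IHl. ring. Qed.

Lemma lsum_filter_le {A} (P : A -> bool) (f g : A -> R) l :
  (forall x, In x l -> P x = true -> g x <= f x) -> (forall x, In x l -> 0 <= f x) ->
  lsum (map g (filter P l)) <= lsum (map f l).
Proof.
  induction l; simpl; intros H1 H2; [lra|].
  assert (IH := IHl (fun x h => H1 x (or_intror h)) (fun x h => H2 x (or_intror h))).
  pose proof (H2 a (or_introl eq_refl)).
  destruct (P a) eqn:E; simpl.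
  - pose proof (H1 a (or_introl eq_refl) E). lra.
  - lra.
Qed.

Section Cover.
Variable M : nat.
Hypothesis HM : (1 <= M)%nat.
Variable a : nat -> R.
Variable n : nat.
Variable t : R.
Hypothesis Ht : 0 < t.

Definition box_of (ds : list nat) : box :=
  {| bn := n; ba := fun i => INR (nth (i - 1) ds 0%nat) / INR M;
     bb := fun i => (INR (nth (i - 1) ds 0%nat) + 1) / INR M |}.

Definition cells : list (list nat) :=
  filter (fun ds => if Rle_dec t (Rabs (Sg M a n ds)) then true else false) (digits M n).

Definition cover : list box := map box_of cells.

Lemma box_of_vol ds : box_vol (box_of ds) = (/ INR M) ^ n.
Proof.
  unfold box_vol, box_of; simpl. pose proof (HMpos M HM).
  rewrite (lprod_ext _ (fun _ => / INR M)) by (intros; field; lra).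
  rewrite lprod_const, length_seq. auto.
Qed.

Lemma cover_vol : lsum (map box_vol cover) <= T2 a n ^ 2 / t ^ 4.
Proof.
  unfold cover, cells. rewrite map_map. pose proof (HMpos M HM) as HMp.
  assert (Hc : 0 < (/ INR M) ^ n) by (apply pow_lt, Rinv_0_lt_compat; auto).
  assert (Ht4 : 0 < t ^ 4) by (apply pow_lt; auto).
  eapply Rle_trans.
  - apply lsum_filter_le with (f := fun ds => (/ INR M) ^ n / t ^ 4 * Sg M a n ds ^ 4).
    + intros ds _ HP. destruct (Rle_dec t (Rabs (Sg M a n ds))) as [Hle|]; [|discriminate].
      rewrite box_of_vol.
      assert (t ^ 4 <= Sg M a n ds ^ 4).
      { replace (Sg M a n ds ^ 4) with (Rabs (Sg M a n ds) ^ 4).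
        apply pow_incr; lra. replace 4%nat with (2 * 2)%nat by reflexivity. rewrite !pow_mult, pow2_abs. reflexivity. }
      apply (Rmult_le_reg_r (t ^ 4)); auto. unfold Rdiv.
      replace ((/ INR M) ^ n * / t ^ 4 * Sg M a n ds ^ 4 * t ^ 4) with ((/ INR M) ^ n * Sg M a n ds ^ 4) by (field; lra).
      apply Rmult_le_compat_l; lra.
    + intros ds _. apply Rmult_le_pos. apply Rlt_le, Rdiv_lt_0_compat; auto.
      replace 4%nat with (2 * 2)%nat by reflexivity. rewrite pow_mult. apply pow2_ge_0.
  - rewrite lsum_scal. pose proof (moment4 M HM a n).
    apply Rle_trans with ((/ INR M) ^ n / t ^ 4 * (INR M ^ n * T2 a n ^ 2)).
    + apply Rmult_le_compat_l; auto. apply Rlt_le, Rdiv_lt_0_compat; auto.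
    + right. rewrite pow_inv. field. split; [lra|]. apply pow_nonzero; lra.
Qed.

Lemma cover_ok B : In B cover -> box_ok B.
Proof.
  unfold cover, cells. intros H. apply in_map_iff in H. destruct H as [ds [<- H]].
  apply filter_In in H. destruct H as [H _]. destruct (digits_spec M HM n ds H) as [Hl Hd].
  intros i Hi. simpl in Hi |- *. pose proof (HMpos M HM).
  assert (Hlt : (nth (i - 1) ds 0 < M)%nat) by (apply Hd, nth_In; lia).
  assert (INR (nth (i - 1) ds 0%nat) + 1 <= INR M) by (rewrite <- S_INR; apply le_INR; lia).
  pose proof (pos_INR (nth (i - 1) ds 0%nat)).
  split; [|split].
  - apply Rmult_le_pos; auto. left; apply Rinv_0_lt_compat; auto.
  - unfold Rdiv. apply Rmult_le_compat_r; [left; apply Rinv_0_lt_compat; auto|lra].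
  - apply (Rmult_le_reg_r (INR M)); auto. unfold Rdiv. rewrite Rmult_assoc, Rinv_l; lra.
Qed.

Lemma grid_exists y : 0 <= y <= 1 -> exists j, (j < M)%nat /\ INR j / INR M <= y <= (INR j + 1) / INR M.
Proof.
  intros Hy. pose proof (HMpos M HM).
  assert (G : forall k, (1 <= k <= M)%nat -> y <= INR k / INR M ->
              exists j, (j < k)%nat /\ INR j / INR M <= y <= (INR j + 1) / INR M).
  { induction k; intros Hk Hyk; [lia|].
    destruct (Rle_dec y (INR k / INR M)) as [Hle|Hgt].
    - destruct (Nat.eq_dec k 0) as [->|Hk0].
      + exists 0%nat. split; [lia|]. simpl in *. unfold Rdiv in *. rewrite Rmult_0_l in *. lra.
      + destruct (IHk ltac:(lia) Hle) as [j [Hj1 Hj2]]. exists j. split; auto; lia.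
    - exists k. split; [lia|]. rewrite S_INR in Hyk. lra. }
  destruct (G M ltac:(lia)) as [j Hj]; [unfold Rdiv; rewrite Rinv_r; lra|]. exists j; auto.
Qed.

Lemma digits_exists (P : nat -> nat -> Prop) :
  (forall i, (1 <= i)%nat -> exists j, (j < M)%nat /\ P i j) ->
  forall m, exists ds, In ds (digits M m) /\ forall i, (1 <= i <= m)%nat -> P i (nth (i - 1) ds 0%nat).
Proof.
  intros HP. induction m.
  - exists []. split; [simpl; auto|]. intros; lia.
  - destruct IHm as [ds [Hds HPd]]. destruct (HP (S m) ltac:(lia)) as [j [Hj HPj]].
    destruct (digits_spec M HM m ds Hds) as [Hl _].
    exists (ds ++ [j]). split.
    + simpl. apply in_flat_map. exists ds. split; auto. apply in_map_iff. exists j. split; auto. apply in_seq; lia.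
    + intros i Hi. destruct (Nat.eq_dec i (S m)) as [->|Hne].
      * rewrite app_nth2 by lia. rewrite Hl. replace (S m - 1 - m)%nat with 0%nat by lia. simpl. auto.
      * rewrite app_nth1 by lia. apply HPd. lia.
Qed.

Lemma cover_covers x : in_Omega x ->
  lsum (map (fun i => Rabs (a i)) (seq 1 n)) <= t * INR M ->
  2 * t < Rabs (lsum (map (fun i => a i * (x i - 1/2)) (seq 1 n))) ->
  exists B, In B cover /\ in_box B x.
Proof.
  intros Hx Ha Hbig. pose proof (HMpos M HM) as HMp.
  destruct (digits_exists (fun i j => INR j / INR M <= x i <= (INR j + 1) / INR M)
             (fun i Hi => grid_exists (x i) (Hx i Hi)) n) as [ds [Hds Hin]].
  assert (Hclose : Rabs (lsum (map (fun i => a i * (x i - 1/2)) (seq 1 n)) - Sg M a n ds) <= t).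
  { unfold Sg. rewrite lsum_minus.
    eapply Rle_trans; [apply lsum_abs|].
    apply Rle_trans with (lsum (map (fun i => Rabs (a i) * / INR M) (seq 1 n))).
    - apply lsum_le. intros i Hi. apply in_seq in Hi. specialize (Hin i ltac:(lia)).
      replace (a i * (x i - 1 / 2) - a i * (cen M ds i - 1 / 2)) with (a i * (x i - cen M ds i)) by ring.
      rewrite Rabs_mult. apply Rmult_le_compat_l; [apply Rabs_pos|].
      unfold cen. apply Rabs_le. unfold Rdiv in *.
      rewrite Rmult_plus_distr_r in Hin |- *. split; nra.
    - rewrite (lsum_ext _ (fun i => / INR M * Rabs (a i))) by (intros; ring). rewrite lsum_scal.
      apply (Rmult_le_reg_l (INR M)); auto. rewrite <- Rmult_assoc, Rinv_r, Rmult_1_l by lra. lra. }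
  exists (box_of ds). split.
  - unfold cover, cells. apply in_map. apply filter_In. split; auto.
    destruct (Rle_dec t (Rabs (Sg M a n ds))) as [|Hn]; auto. exfalso.
    pose proof (Rabs_triang_inv (lsum (map (fun i => a i * (x i - 1 / 2)) (seq 1 n))) (Sg M a n ds)). lra.
  - intros i Hi. simpl in Hi. simpl. apply Hin. lia.
Qed.
End Cover.

Lemma lsum_incl {A} (f : A -> R) (l1 l2 : list A) :
  NoDup l1 -> incl l1 l2 -> (forall x, In x l2 -> 0 <= f x) -> lsum (map f l1) <= lsum (map f l2).
Proof.
  revert l2. induction l1 as [|x l1 IH]; intros l2 Hnd Hinc Hpos.
  - simpl. apply lsum_ge0; auto.
  - inversion Hnd; subst.
    assert (Hx : In x l2) by (apply Hinc; simpl; auto).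
    apply in_split in Hx. destruct Hx as [u [v ->]].
    rewrite map_app, lsum_app. simpl.
    assert (lsum (map f l1) <= lsum (map f (u ++ v))).
    { apply IH; auto.
      - intros y Hy. assert (Hy2 : In y (u ++ x :: v)) by (apply Hinc; simpl; auto).
        apply in_app_or in Hy2. apply in_or_app. destruct Hy2 as [H|[H|H]]; auto. subst; contradiction.
      - intros y Hy. apply Hpos. apply in_app_or in Hy. apply in_or_app. destruct Hy; simpl; auto. }
    rewrite map_app, lsum_app in H. lra.
Qed.

Lemma lsum_list_prod {A B} (f : A * B -> R) l1 l2 :
  lsum (map f (list_prod l1 l2)) = lsum (map (fun u => lsum (map (fun j => f (u, j)) l2)) l1).
Proof. induction l1; simpl; auto. rewrite map_app, lsum_app, IHl1, map_map. reflexivity. Qed.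

Lemma lsum_nth_le {A} (g : A -> R) (d : A) (l : list A) m :
  g d = 0 -> (forall x, In x l -> 0 <= g x) ->
  lsum (map (fun j => g (nth j l d)) (seq 0 m)) <= lsum (map g l).
Proof.
  intros Hd. revert m. induction l as [|x l IH]; intros m Hpos.
  - simpl. rewrite (lsum_ext _ (fun _ => 0)) by (intros j _; destruct j; auto).
    rewrite lsum_const. lra.
  - destruct m.
    + simpl. apply (lsum_ge0 g (x :: l)); auto.
    + change (seq 0 (S m)) with (0%nat :: seq 1 m). rewrite <- seq_shift, map_cons, map_map.
      simpl. pose proof (IH m (fun y h => Hpos y (or_intror h))). unfold lsum in *. simpl. lra.
Qed.

Lemma tele_term s : (2 <= s)%nat ->
  / (INR s * sqrt (INR s)) <= 2 * (/ sqrt (INR s - 1) - / sqrt (INR s)).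
Proof.
  intros Hs. assert (H2 : 2 <= INR s) by (replace 2 with (INR 2) by (simpl; lra); apply le_INR; auto).
  set (u := sqrt (INR s - 1)). set (v := sqrt (INR s)).
  assert (Hu : 0 < u) by (apply sqrt_lt_R0; lra). assert (Hv : 0 < v) by (apply sqrt_lt_R0; lra).
  assert (Hu2 : u * u = INR s - 1) by (apply sqrt_sqrt; lra).
  assert (Hv2 : v * v = INR s) by (apply sqrt_sqrt; lra).
  assert (Huv : u <= v) by (apply sqrt_le_1_alt; lra).
  assert (Hd : (v - u) * (v + u) = 1) by nra.
  assert (Hk : u <= (v - u) * (2 * (v * v))).
  { replace u with ((v - u) * (v + u) * u) at 1 by (rewrite Hd; ring).
    assert (0 <= v - u) by lra. assert (u * (v + u) <= 2 * (v * v)) by nra. nra. }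
  rewrite <- Hv2. apply (Rmult_le_reg_r (v * v * v * u)). repeat apply Rmult_lt_0_compat; auto.
  replace (/ (v * v * v) * (v * v * v * u)) with u by (field; lra).
  replace (2 * (/ u - / v) * (v * v * v * u)) with ((v - u) * (2 * (v * v))) by (field; lra).
  auto.
Qed.

Lemma tele_sum R0 m : (2 <= R0)%nat ->
  lsum (map (fun u => / (INR (R0 + u) * sqrt (INR (R0 + u)))) (seq 0 m))
    <= 2 * (/ sqrt (INR R0 - 1) - / sqrt (INR (R0 + m) - 1)).
Proof.
  intros HR. induction m.
  - simpl. rewrite Nat.add_0_r. lra.
  - rewrite seq_S, map_app, lsum_app. simpl.
    pose proof (tele_term (R0 + m) ltac:(lia)).
    replace (INR (R0 + S m) - 1) with (INR (R0 + m)) by (rewrite Nat.add_succ_r, S_INR; ring).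
    replace (0 + m)%nat with m by lia. lra.
Qed.

Lemma nat_up x : x <= INR (Z.to_nat (up x)).
Proof.
  destruct (archimed x) as [H _]. destruct (Z_le_gt_dec (up x) 0).
  - apply IZR_le in l. pose proof (pos_INR (Z.to_nat (up x))). lra.
  - rewrite INR_IZR_INZ, Z2Nat.id by lia. lra.
Qed.

Lemma cv_inv_sqrt_gen (w : nat -> R) : (exists N, forall s, (N <= s)%nat -> 0 < w s) ->
  Un_cv (fun s => / w s) 0 -> Un_cv (fun s => / sqrt (w s)) 0.
Proof.
  intros HN H. pose proof (continuity_seq sqrt _ 0 (continuity_pt_sqrt 0 (Rle_refl 0)) H) as H1.
  rewrite sqrt_0 in H1. eapply cvext; [|exact H1]. intros s. simpl. apply sqrt_inv.
Qed.

Definition tt (s : nat) : R := / sqrt (sqrt (sqrt (INR s))).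

Lemma tt_cv : Un_cv tt 0.
Proof.
  unfold tt. apply cv_inv_sqrt_gen. exists 1%nat. intros s Hs. apply sqrt_lt_R0, sqrt_lt_R0, lt_0_INR; lia.
  apply cv_inv_sqrt_gen. exists 1%nat. intros s Hs. apply sqrt_lt_R0, lt_0_INR; lia.
  apply cv_inv_sqrt.
Qed.

Lemma tt_pos s : (1 <= s)%nat -> 0 < tt s.
Proof. intros. unfold tt. apply Rinv_0_lt_compat, sqrt_lt_R0, sqrt_lt_R0, sqrt_lt_R0, lt_0_INR; lia. Qed.

Lemma tt4 s : (1 <= s)%nat -> tt s ^ 4 = / sqrt (INR s).
Proof.
  intros Hs. unfold tt. assert (0 < INR s) by (apply lt_0_INR; lia).
  assert (0 < sqrt (INR s)) by (apply sqrt_lt_R0; auto).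
  assert (0 < sqrt (sqrt (INR s))) by (apply sqrt_lt_R0; auto).
  assert (0 < sqrt (sqrt (sqrt (INR s)))) by (apply sqrt_lt_R0; auto).
  rewrite pow_inv. f_equal.
  replace 4%nat with (2 * 2)%nat by reflexivity. rewrite pow_mult. simpl. rewrite !Rmult_1_r.
  rewrite sqrt_sqrt by lra. rewrite sqrt_sqrt by lra. reflexivity.
Qed.

Definition zbox : box := {| bn := 1; ba := fun _ => 0; bb := fun _ => 0 |}.
Lemma zbox_ok : box_ok zbox. Proof. intros i _. simpl. lra. Qed.
Lemma zbox_vol : box_vol zbox = 0. Proof. unfold box_vol. simpl. ring. Qed.

Lemma box_vol_ge0 B : box_ok B -> 0 <= box_vol B.
Proof.
  intros H. unfold box_vol. assert (forall l, (forall i, In i l -> (1 <= i <= bn B)%nat) ->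
    0 <= lprod (map (fun i => bb B i - ba B i) l)).
  { induction l; simpl; intros Hl; [lra|]. apply Rmult_le_pos.
    - destruct (H a (Hl a (or_introl eq_refl))) as [_ [? _]]. lra.
    - apply IHl. auto. }
  apply H0. intros i Hi. apply in_seq in Hi. lia.
Qed.

Section AE.
Variable A : nat -> nat -> R.
Variable c : R.
Variable R0 : nat.
Hypothesis Hc : 0 < c.
Hypothesis HA : forall s i, (R0 <= s)%nat -> (1 <= i <= s)%nat -> Rabs (A s i) <= c / INR s.

Definition Zs (x : nat -> R) (s : nat) : R := lsum (map (fun i => A s i * (x i - 1/2)) (seq 1 s)).
Definition MM (s : nat) : nat := S (Z.to_nat (up (c / tt s))).
Definition LL (s : nat) : list box := cover (MM s) (A s) s (tt s).

Lemma MM_ge1 s : (1 <= MM s)%nat. Proof. unfold MM; lia. Qed.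

Lemma LL_ok s B : (1 <= s)%nat -> In B (LL s) -> box_ok B.
Proof. intros Hs H. eapply cover_ok; [apply MM_ge1|exact H]. Qed.

Lemma LL_vol s : (max R0 1 <= s)%nat -> lsum (map box_vol (LL s)) <= c ^ 4 * / (INR s * sqrt (INR s)).
Proof.
  intros Hs. unfold LL. eapply Rle_trans; [apply cover_vol; [apply MM_ge1|apply tt_pos; lia]|].
  assert (Hs0 : 0 < INR s) by (apply lt_0_INR; lia).
  assert (Hsq : 0 < sqrt (INR s)) by (apply sqrt_lt_R0; auto).
  assert (HT : T2 (A s) s <= c ^ 2 / INR s).
  { unfold T2. eapply Rle_trans. apply lsum_le with (g := fun _ => (c / INR s) ^ 2).
    - intros i Hi. apply in_seq in Hi. rewrite <- pow2_abs. apply pow_incr. split; [apply Rabs_pos|]. apply HA; lia.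
    - rewrite lsum_const, length_seq. right. field. lra. }
  pose proof (T2_ge0 (A s) s).
  rewrite tt4 by lia.
  apply Rle_trans with ((c ^ 2 / INR s) ^ 2 / / sqrt (INR s)).
  - unfold Rdiv. apply Rmult_le_compat_r. left; apply Rinv_0_lt_compat, Rinv_0_lt_compat; auto.
    apply pow_incr; lra.
  - right. assert (Hq : sqrt (INR s) * sqrt (INR s) = INR s) by (apply sqrt_sqrt; lra).
    set (q := sqrt (INR s)) in *. rewrite <- Hq. field. lra.
Qed.

Lemma LL_covers s x : (max R0 1 <= s)%nat -> in_Omega x -> 2 * tt s < Rabs (Zs x s) ->
  exists B, In B (LL s) /\ in_box B x.
Proof.
  intros Hs Hx Hbig. unfold LL. apply cover_covers; try apply MM_ge1; auto.
  assert (Hs0 : 0 < INR s) by (apply lt_0_INR; lia).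
  apply Rle_trans with (INR (length (seq 1 s)) * (c / INR s)).
  - rewrite <- lsum_const. apply lsum_le. intros i Hi. apply in_seq in Hi. apply HA; lia.
  - rewrite length_seq. pose proof (tt_pos s ltac:(lia)).
    replace (INR s * (c / INR s)) with c by (field; lra).
    unfold MM. rewrite S_INR. pose proof (nat_up (c / tt s)).
    apply Rle_trans with (tt s * (c / tt s)). right; field; lra.
    apply Rmult_le_compat_l; lra.
Qed.

Lemma ae_Z : Omega_null (fun x => ~ Un_cv (Zs x) 0).
Proof.
  intros eps Heps.
  destruct (nat_arch ((2 * c ^ 4 / eps) ^ 2)) as [N HN].
  set (R := (max R0 N + 2)%nat).
  set (C := fun k => let '(u, j) := Cantor.of_nat k in nth j (LL (R + u)) zbox).
  exists C. split; [|split].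
  - intros k. unfold C. destruct (Cantor.of_nat k) as [u j].
    destruct (nth_in_or_default j (LL (R + u)) zbox) as [Hi|He].
    + apply (LL_ok (R + u)); auto. unfold R; lia.
    + rewrite He. apply zbox_ok.
  - intros x Hx Hbad.
    assert (Hex : exists s, (R <= s)%nat /\ 2 * tt s < Rabs (Zs x s)).
    { apply NNPP. intros Hno. apply Hbad. apply cv_squeeze0 with (v := fun s => 2 * tt s).
      - exists R. intros s Hs. apply Rnot_lt_le. intros Hlt. apply Hno. exists s. auto.
      - replace 0 with (2 * 0) by ring. apply cv_scal, tt_cv. }
    destruct Hex as [s [Hs Hbig]].
    destruct (LL_covers s x ltac:(unfold R in *; lia) Hx Hbig) as [B [HB HBx]].
    destruct (In_nth _ _ zbox HB) as [j [_ Hj]].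
    exists (Cantor.to_nat ((s - R)%nat, j)). unfold C. rewrite Cantor.cancel_of_to.
    replace (R + (s - R))%nat with s by lia. rewrite Hj. auto.
  - intros m.
    set (f := fun pr : nat * nat => box_vol (nth (snd pr) (LL (R + fst pr)) zbox)).
    assert (Hf0 : forall pr, 0 <= f pr).
    { intros [u j]. unfold f; simpl. destruct (nth_in_or_default j (LL (R + u)) zbox) as [Hi|He].
      + apply box_vol_ge0. apply (LL_ok (R + u)); auto. unfold R; lia.
      + rewrite He, zbox_vol. lra. }
    assert (E1 : lsum (map (fun k => box_vol (C k)) (seq 0 m)) = lsum (map f (map Cantor.of_nat (seq 0 m)))).
    { rewrite map_map. apply lsum_ext. intros k _. unfold C, f. destruct (Cantor.of_nat k); reflexivity. }
    rewrite E1.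
    eapply Rle_trans.
    { apply lsum_incl with (l2 := list_prod (seq 0 m) (seq 0 m)); auto.
      - apply Injective_map_NoDup; [|apply seq_NoDup].
        intros k1 k2 Hk. rewrite <- (Cantor.cancel_to_of k1), <- (Cantor.cancel_to_of k2), Hk. auto.
      - intros pr Hpr. apply in_map_iff in Hpr. destruct Hpr as [k [Hk Hkm]]. apply in_seq in Hkm.
        destruct pr as [u j]. pose proof (Cantor.to_nat_non_decreasing u j) as Hnd.
        rewrite <- Hk, Cantor.cancel_to_of in Hnd. apply in_prod; apply in_seq; lia. }
    rewrite lsum_list_prod.
    apply Rle_trans with (lsum (map (fun u => c ^ 4 * / (INR (R + u) * sqrt (INR (R + u)))) (seq 0 m))).
    + apply lsum_le. intros u Hu. unfold f; simpl.
      eapply Rle_trans; [apply (lsum_nth_le box_vol zbox (LL (R + u)) m zbox_vol)|].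
      * intros B HB. apply box_vol_ge0. apply (LL_ok (R + u)); auto. unfold R; lia.
      * apply LL_vol. unfold R; lia.
    + rewrite lsum_scal. pose proof (tele_sum R m ltac:(unfold R; lia)).
      assert (HR1 : INR N + 1 <= INR R - 1).
      { unfold R. rewrite plus_INR. simpl. assert (INR N <= INR (max R0 N)) by (apply le_INR; lia). lra. }
      assert (Hsq : 2 * c ^ 4 / eps < sqrt (INR R - 1)).
      { assert (0 <= 2 * c ^ 4 / eps) by (apply Rlt_le, Rdiv_lt_0_compat; [apply Rmult_lt_0_compat; [lra|apply pow_lt; auto]|auto]).
        rewrite <- (sqrt_pow2 (2 * c ^ 4 / eps)) by auto. apply sqrt_lt_1_alt. split. apply pow2_ge_0. lra. }
      assert (Hq1 : 0 < sqrt (INR R - 1)) by (apply sqrt_lt_R0; pose proof (pos_INR N); lra).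
      assert (Hq2 : 0 < sqrt (INR (R + m) - 1)).
      { apply sqrt_lt_R0. rewrite plus_INR. pose proof (pos_INR m). pose proof (pos_INR N). lra. }
      assert (0 < / sqrt (INR (R + m) - 1)) by (apply Rinv_0_lt_compat; auto).
      assert (Hc4 : 0 < c ^ 4) by (apply pow_lt; auto).
      apply Rle_trans with (c ^ 4 * (2 * / sqrt (INR R - 1))).
      * apply Rmult_le_compat_l; lra.
      * apply (Rmult_le_reg_r (sqrt (INR R - 1))); auto.
        replace (c ^ 4 * (2 * / sqrt (INR R - 1)) * sqrt (INR R - 1)) with (2 * c ^ 4) by (field; lra).
        apply (Rmult_lt_compat_l eps) in Hsq; auto.
        replace (eps * (2 * c ^ 4 / eps)) with (2 * c ^ 4) in Hsq by (field; lra). lra.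
Qed.
End AE.

Lemma cont_eps f x0 : continuity_pt f x0 -> forall eps, 0 < eps ->
  exists del, 0 < del /\ forall x, Rabs (x - x0) < del -> Rabs (f x - f x0) < eps.
Proof.
  intros H eps He. destruct (H eps He) as [del [Hd Hf]]. exists del. split; auto.
  intros x Hx. destruct (Req_dec x x0) as [->|Hne].
  - rewrite Rminus_diag, Rabs_R0; auto.
  - assert (HH : D_x no_cond x0 x /\ R_dist x x0 < del).
    { split; [split; [exact I|apply not_eq_sym; auto]|exact Hx]. }
    apply (Hf x HH).
Qed.

Lemma smooth_cont h : smooth h -> forall t, continuity_pt h t.
Proof.
  intros [f [H0 H1]] t. apply derivable_continuous_pt in H1 || idtac.
  assert (continuity_pt (f 0%nat) t).
  { apply derivable_continuous_pt. exists (f 1%nat t). apply H1. }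
  intros eps He. destruct (H eps He) as [d [Hd Hf]]. exists d. split; auto.
  intros x Hx. rewrite <- !H0. apply Hf; auto.
Qed.

Lemma interval_pick lo t0 eta : lo <= t0 <= lo + 1/2 -> 0 < eta ->
  exists al be, lo < al < be /\ be < lo + 1/2 /\ t0 - eta < al /\ be < t0 + eta.
Proof.
  intros Ht He. set (e := Rmin eta (1/8)).
  assert (0 < e) by (unfold e; apply Rmin_glb_lt; lra). assert (e <= eta) by apply Rmin_l.
  assert (e <= 1/8) by apply Rmin_r.
  destruct (Rle_dec t0 (lo + 1/4)).
  - exists (t0 + e / 4), (t0 + e / 2). repeat split; lra.
  - exists (t0 - e / 2), (t0 - e / 4). repeat split; lra.
Qed.

Lemma good_interval h lo : smooth h -> (forall t, 0 <= t <= 1 -> 0 <= h t <= 1) ->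
  0 <= lo -> lo + 1/2 <= 1 ->
  (exists t, lo <= t <= lo + 1/2 /\ h t <> 0) ->
  exists al be ga, lo < al < be /\ be < lo + 1/2 /\ 0 < ga /\ forall t, al <= t <= be -> ga <= h t.
Proof.
  intros Hs Hr Hlo Hhi [t0 [Ht0 Hnz]].
  assert (Hpos : 0 < h t0) by (destruct (Hr t0 ltac:(lra)); lra).
  destruct (cont_eps h t0 (smooth_cont h Hs t0) (h t0 / 2) ltac:(lra)) as [d [Hd Hf]].
  destruct (interval_pick lo t0 d Ht0 Hd) as [al [be [H1 [H2 [H3 H4]]]]].
  exists al, be, (h t0 / 2). repeat split; try lra.
  intros t Ht. assert (Rabs (t - t0) < d) by (apply Rabs_def1; lra).
  specialize (Hf t H). apply Rabs_def2 in Hf. lra.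
Qed.

Lemma nat_ceil x : 0 <= x -> exists a : nat, x < INR a <= x + 1.
Proof.
  intros Hx. destruct (archimed x) as [H1 H2]. exists (Z.to_nat (up x)).
  assert (0 < up x)%Z by (apply lt_IZR; lra).
  rewrite INR_IZR_INZ, Z2Nat.id by lia. lra.
Qed.

Lemma nat_floor x : 0 <= x -> exists b : nat, INR b <= x < INR b + 1.
Proof.
  intros Hx. destruct (nat_ceil x Hx) as [a [H1 H2]].
  destruct a. simpl in H1; lra.
  destruct (Rle_dec (INR a + 1) x).
  - exists (S a). rewrite S_INR in *. lra.
  - exists a. rewrite S_INR in *. lra.
Qed.

Lemma lsum_sub_seq (F : nat -> R) a k r : (1 <= a)%nat -> (a + k <= r + 1)%nat ->
  (forall i, (1 <= i <= r)%nat -> 0 <= F i) ->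
  lsum (map F (seq a k)) <= lsum (map F (seq 1 r)).
Proof.
  intros Ha Hk HF. apply lsum_incl. apply seq_NoDup.
  intros i Hi. apply in_seq in Hi. apply in_seq. lia.
  intros i Hi. apply in_seq in Hi. apply HF. lia.
Qed.

Lemma W_lower (h : R -> R) (g : nat -> R) (r : nat) al be ga ka :
  0 < al -> al < be -> be <= 1 -> 0 < ga -> 0 <= ka -> (1 <= r)%nat ->
  (forall t, al <= t <= be -> ga <= h t) ->
  (forall i, (1 <= i <= r)%nat -> 0 <= h (INR i / INR r) * g i) ->
  (forall i, al * INR r <= INR i <= be * INR r -> ka <= g i) ->
  ga * ka * ((be - al) * INR r - 1) <= lsum (map (fun i => h (INR i / INR r) * g i) (seq 1 r)).
Proof.
  intros Hal Hab Hbe Hga Hka Hr Hh Hpos Hg.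
  assert (Hr0 : 0 < INR r) by (apply lt_0_INR; lia).
  destruct (nat_ceil (al * INR r) ltac:(nra)) as [a [Ha1 Ha2]].
  destruct (nat_floor (be * INR r) ltac:(nra)) as [b [Hb1 Hb2]].
  assert (Ha : (1 <= a)%nat) by (destruct a; [simpl in Ha1; nra|lia]).
  assert (be * INR r <= INR r) by (rewrite <- (Rmult_1_l (INR r)) at 2; apply Rmult_le_compat_r; lra).
  assert (Hbr : (b <= r)%nat) by (apply INR_le; lra).
  assert (al * INR r <= INR r) by (rewrite <- (Rmult_1_l (INR r)) at 2; apply Rmult_le_compat_r; lra).
  assert (Har : (a <= r + 1)%nat) by (apply INR_le; rewrite plus_INR; simpl; lra).
  set (k := (S b - a)%nat).
  assert (Hk : INR b + 1 - INR a <= INR k).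
  { unfold k. destruct (le_lt_dec a (S b)).
    - rewrite minus_INR, S_INR by auto. lra.
    - assert (Hsb : INR (S b) < INR a) by (apply lt_INR; auto). rewrite S_INR in Hsb. pose proof (pos_INR (S b - a)). lra. }
  eapply Rle_trans; [|apply (lsum_sub_seq _ a k r Ha ltac:(unfold k; lia) Hpos)].
  apply Rle_trans with (INR (length (seq a k)) * (ga * ka)).
  - rewrite length_seq. destruct (Rle_dec 0 ((be - al) * INR r - 1)).
    + rewrite Rmult_comm. apply Rmult_le_compat_r. nra. lra.
    + apply Rle_trans with 0. assert (0 <= ga * ka) by nra. nra. apply Rmult_le_pos. apply pos_INR. nra.
  - rewrite <- lsum_const. apply lsum_le. intros i Hi. apply in_seq in Hi.
    assert (HiR1 : INR a <= INR i) by (apply le_INR; lia).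
    assert (HiR2 : INR i <= INR b) by (apply le_INR; unfold k in Hi; lia).
    assert (Hgi := Hg i ltac:(split; lra)).
    assert (Hhi : ga <= h (INR i / INR r)).
    { apply Hh. split.
      - apply (Rmult_le_reg_r (INR r)); auto. unfold Rdiv. rewrite Rmult_assoc, Rinv_l; lra.
      - apply (Rmult_le_reg_r (INR r)); auto. unfold Rdiv. rewrite Rmult_assoc, Rinv_l; lra. }
    apply Rmult_le_compat; lra.
Qed.

Lemma nat_sub_lip1 x y z : Rabs (INR (x - y) - INR (x - z)) <= Rabs (INR y - INR z).
Proof.
  assert (Hy : INR (x - y) = Rmax (INR x - INR y) 0).
  { destruct (le_lt_dec x y).
    - replace (x - y)%nat with 0%nat by lia. assert (INR x <= INR y) by (apply le_INR; auto).
      rewrite Rmax_right by lra. reflexivity.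
    - rewrite minus_INR by lia. assert (INR y < INR x) by (apply lt_INR; auto). rewrite Rmax_left; lra. }
  assert (Hz : INR (x - z) = Rmax (INR x - INR z) 0).
  { destruct (le_lt_dec x z).
    - replace (x - z)%nat with 0%nat by lia. assert (INR x <= INR z) by (apply le_INR; auto).
      rewrite Rmax_right by lra. reflexivity.
    - rewrite minus_INR by lia. assert (INR z < INR x) by (apply lt_INR; auto). rewrite Rmax_left; lra. }
  rewrite Hy, Hz. pose proof (Rle_abs (INR y - INR z)). pose proof (Rle_abs (- (INR y - INR z))).
  rewrite Rabs_Ropp in H0. apply Rabs_le.
  destruct (Rle_dec (INR x - INR y) 0); destruct (Rle_dec (INR x - INR z) 0);
  repeat first [rewrite Rmax_right by lra | rewrite Rmax_left by lra]; lra.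
Qed.

Lemma nat_sub_lip2 x y z : Rabs (INR (y - x) - INR (z - x)) <= Rabs (INR y - INR z).
Proof.
  assert (Hy : INR (y - x) = Rmax (INR y - INR x) 0).
  { destruct (le_lt_dec y x).
    - replace (y - x)%nat with 0%nat by lia. assert (INR y <= INR x) by (apply le_INR; auto).
      rewrite Rmax_right by lra. reflexivity.
    - rewrite minus_INR by lia. assert (INR x < INR y) by (apply lt_INR; auto). rewrite Rmax_left; lra. }
  assert (Hz : INR (z - x) = Rmax (INR z - INR x) 0).
  { destruct (le_lt_dec z x).
    - replace (z - x)%nat with 0%nat by lia. assert (INR z <= INR x) by (apply le_INR; auto).
      rewrite Rmax_right by lra. reflexivity.
    - rewrite minus_INR by lia. assert (INR x < INR z) by (apply lt_INR; auto). rewrite Rmax_left; lra. }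
  rewrite Hy, Hz. pose proof (Rle_abs (INR y - INR z)). pose proof (Rle_abs (- (INR y - INR z))).
  rewrite Rabs_Ropp in H0. apply Rabs_le.
  destruct (Rle_dec (INR y - INR x) 0); destruct (Rle_dec (INR z - INR x) 0);
  repeat first [rewrite Rmax_right by lra | rewrite Rmax_left by lra]; lra.
Qed.

Lemma ratio1 (u v e : nat -> R) :
  (exists N, forall r, (N <= r)%nat -> 0 < v r /\ Rabs (u r - v r) <= e r * v r) ->
  Un_cv e 0 -> Un_cv (fun r => u r / v r) 1.
Proof.
  intros [N HN] He. apply cv_0_iff. apply cv_squeeze0 with (v := e).
  - exists N. intros r Hr. destruct (HN r Hr) as [Hv Hb].
    replace (u r / v r - 1) with ((u r - v r) / v r) by (field; lra).
    unfold Rdiv. rewrite Rabs_mult, Rabs_inv, (Rabs_pos_eq (v r)) by lra.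
    apply (Rmult_le_reg_r (v r)); auto. rewrite Rmult_assoc, Rinv_l by lra. lra.
  - auto.
Qed.

Lemma INR_sub_ge x y : INR x - INR y <= INR (x - y).
Proof. destruct (le_lt_dec y x). rewrite minus_INR by auto; lra.
  replace (x - y)%nat with 0%nat by lia. assert (INR x < INR y) by (apply lt_INR; auto). simpl; lra. Qed.

Lemma null_mono (N1 N2 : (nat -> R) -> Prop) :
  Omega_null N1 -> (forall x, in_Omega x -> N2 x -> N1 x) -> Omega_null N2.
Proof.
  intros H Himp eps He. destruct (H eps He) as [C [H1 [H2 H3]]]. exists C. split; auto.
Qed.

Section Main.
Variable h : R -> R.
Hypothesis h_smooth : smooth h.
Hypothesis h_range : forall t, 0 <= t <= 1 -> 0 <= h t <= 1.
Hypothesis h_nz_left : exists t, 0 <= t <= 1/2 /\ h t <> 0.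
Hypothesis h_nz_right : exists t, 1/2 <= t <= 1 /\ h t <> 0.

Definition w1 (p i : nat) : R := INR (i - S p).
Definition w2 (p i : nat) : R := INR (S (S p) - i).
Definition Wq (w : nat -> nat -> R) (r p : nat) : R := lsum (map (fun i => h (INR i / INR r) * w p i) (seq 1 r)).

Lemma h_at r i : (1 <= i <= r)%nat -> 0 <= h (INR i / INR r) <= 1.
Proof. intros H. apply h_range. assert (0 < INR r) by (apply lt_0_INR; lia).
  assert (INR i <= INR r) by (apply le_INR; lia). pose proof (pos_INR i). split.
  apply Rmult_le_pos; [lra|left; apply Rinv_0_lt_compat; lra].
  apply (Rmult_le_reg_r (INR r)); auto. unfold Rdiv. rewrite Rmult_assoc, Rinv_l; lra. Qed.

Lemma W_lip1 r p m : Rabs (Wq w1 r p - Wq w1 r m) <= INR r * Rabs (INR p - INR m).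
Proof.
  unfold Wq. rewrite lsum_minus. eapply Rle_trans; [apply lsum_abs|].
  apply Rle_trans with (lsum (map (fun _ => Rabs (INR p - INR m)) (seq 1 r))).
  2:{ rewrite lsum_const, length_seq. lra. }
  apply lsum_le. intros i Hi. apply in_seq in Hi.
  replace (h (INR i / INR r) * w1 p i - h (INR i / INR r) * w1 m i) with (h (INR i / INR r) * (w1 p i - w1 m i)) by ring.
  rewrite Rabs_mult. destruct (h_at r i ltac:(lia)).
  rewrite (Rabs_pos_eq (h _)) by lra.
  assert (Rabs (w1 p i - w1 m i) <= Rabs (INR p - INR m)).
  { unfold w1. eapply Rle_trans; [apply nat_sub_lip1|]. rewrite !S_INR. replace (INR p + 1 - (INR m + 1)) with (INR p - INR m) by ring. lra. }
  pose proof (Rabs_pos (w1 p i - w1 m i)). nra.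
Qed.

Lemma W_lip2 r p m : Rabs (Wq w2 r p - Wq w2 r m) <= INR r * Rabs (INR p - INR m).
Proof.
  unfold Wq. rewrite lsum_minus. eapply Rle_trans; [apply lsum_abs|].
  apply Rle_trans with (lsum (map (fun _ => Rabs (INR p - INR m)) (seq 1 r))).
  2:{ rewrite lsum_const, length_seq. lra. }
  apply lsum_le. intros i Hi. apply in_seq in Hi.
  replace (h (INR i / INR r) * w2 p i - h (INR i / INR r) * w2 m i) with (h (INR i / INR r) * (w2 p i - w2 m i)) by ring.
  rewrite Rabs_mult. destruct (h_at r i ltac:(lia)).
  rewrite (Rabs_pos_eq (h _)) by lra.
  assert (Rabs (w2 p i - w2 m i) <= Rabs (INR p - INR m)).
  { unfold w2. eapply Rle_trans; [apply nat_sub_lip2|]. rewrite !S_INR. replace (INR p + 1 + 1 - (INR m + 1 + 1)) with (INR p - INR m) by ring. lra. }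
  pose proof (Rabs_pos (w2 p i - w2 m i)). nra.
Qed.

Definition central (q : nat -> nat) : Prop :=
  forall eps, 0 < eps -> exists N, forall r, (N <= r)%nat -> Rabs (2 * INR (q r) - INR r) <= eps * INR r.

Lemma mid_central : central mid.
Proof.
  intros eps He. destruct (nat_arch (/ eps)) as [N HN]. exists (S N). intros r Hr.
  pose proof (mid_bounds r) as Hm.
  assert (INR (2 * mid r) <= INR r) by (apply le_INR; lia).
  assert (INR r <= INR (2 * mid r + 1)) by (apply le_INR; lia).
  rewrite plus_INR, mult_INR in *. simpl in *.
  assert (INR N < INR r) by (apply lt_INR; lia).
  assert (1 <= eps * INR r).
  { apply (Rmult_le_reg_l (/ eps)). apply Rinv_0_lt_compat; auto.
    rewrite <- Rmult_assoc, Rinv_l, Rmult_1_l, Rmult_1_r by lra. lra. }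
  apply Rabs_le. lra.
Qed.

Lemma big_enough (x : R) : 0 < x -> exists N : nat, forall r, (N <= r)%nat -> x <= INR r.
Proof. intros H. destruct (nat_arch x) as [N HN]. exists N. intros r Hr.
  assert (INR N <= INR r) by (apply le_INR; auto). lra. Qed.

Lemma W1_lower (q : nat -> nat) : central q ->
  exists del N, 0 < del /\ forall r, (N <= r)%nat -> del * INR r ^ 2 <= Wq w1 r (q r).
Proof.
  intros Hq.
  destruct (good_interval h (1/2) h_smooth h_range ltac:(lra) ltac:(lra)
     ltac:(destruct h_nz_right as [t Ht]; exists t; replace (1/2 + 1/2) with 1 by lra; auto))
     as [al [be [ga [Hab [Hbe [Hga Hh]]]]]].
  set (th := (1/2 + al) / 2).
  destruct (Hq ((al - 1/2) / 2) ltac:(lra)) as [N1 HN1].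
  destruct (big_enough (4 / (al - 1/2) + 2 / (be - al) + 1)) as [N2 HN2].
  { assert (0 < 4 / (al - 1/2)) by (apply Rdiv_lt_0_compat; lra).
    assert (0 < 2 / (be - al)) by (apply Rdiv_lt_0_compat; lra). lra. }
  exists (ga * (al - th) * (be - al) / 2), (N1 + N2)%nat. split.
  - unfold th. apply Rmult_lt_0_compat; [|lra]. apply Rmult_lt_0_compat; [apply Rmult_lt_0_compat|]; lra.
  - intros r Hr. specialize (HN2 r ltac:(lia)). specialize (HN1 r ltac:(lia)).
    assert (0 < 4 / (al - 1/2)) by (apply Rdiv_lt_0_compat; lra).
    assert (0 < 2 / (be - al)) by (apply Rdiv_lt_0_compat; lra).
    assert (Hr0 : 1 <= INR r) by lra.
    assert (Hr1 : (1 <= r)%nat) by (apply INR_le; simpl; lra).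
    assert (Hc' := Rle_abs (2 * INR (q r) - INR r)).
    assert (H4 : 4 <= (al - 1/2) * INR r).
    { assert (4 / (al - 1/2) <= INR r) by lra.
      apply (Rmult_le_compat_l (al - 1/2)) in H1; [|lra].
      replace ((al - 1/2) * (4 / (al - 1/2))) with 4 in H1 by (field; lra). lra. }
    assert (Hq1 : INR (q r) + 1 <= th * INR r) by (unfold th; lra).
    assert (Hbr : 2 <= (be - al) * INR r).
    { assert (2 / (be - al) <= INR r) by lra.
      apply (Rmult_le_compat_l (be - al)) in H1; [|lra].
      replace ((be - al) * (2 / (be - al))) with 2 in H1 by (field; lra). lra. }
    assert (Hka : 0 <= (al - th) * INR r) by (unfold th; nra).
    eapply Rle_trans; [|apply (W_lower h (w1 (q r)) r al be ga ((al - th) * INR r)); auto; try lra].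
    + assert (0 <= ga * ((al - th) * INR r)) by nra.
      replace (ga * (al - th) * (be - al) / 2 * INR r ^ 2) with (ga * ((al - th) * INR r) * ((be - al) * INR r / 2)) by (simpl; field).
      apply Rmult_le_compat_l; lra.
    + intros i Hi. destruct (h_at r i Hi). apply Rmult_le_pos; auto. apply pos_INR.
    + intros i Hi. unfold w1. eapply Rle_trans; [|apply INR_sub_ge]. rewrite S_INR. unfold th in *. lra.
Qed.

Lemma W2_lower (q : nat -> nat) : central q ->
  exists del N, 0 < del /\ forall r, (N <= r)%nat -> del * INR r ^ 2 <= Wq w2 r (q r).
Proof.
  intros Hq.
  destruct (good_interval h 0 h_smooth h_range ltac:(lra) ltac:(lra)
     ltac:(destruct h_nz_left as [t Ht]; exists t; replace (0 + 1/2) with (1/2) by lra; auto))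
     as [al [be [ga [Hab [Hbe [Hga Hh]]]]]].
  set (th := (1/2 + be) / 2).
  destruct (Hq ((1/2 - be) / 2) ltac:(lra)) as [N1 HN1].
  destruct (big_enough (2 / (be - al) + 1)) as [N2 HN2].
  { assert (0 < 2 / (be - al)) by (apply Rdiv_lt_0_compat; lra). lra. }
  exists (ga * (th - be) * (be - al) / 2), (N1 + N2)%nat. split.
  - unfold th. apply Rmult_lt_0_compat; [|lra]. apply Rmult_lt_0_compat; [apply Rmult_lt_0_compat|]; lra.
  - intros r Hr. specialize (HN2 r ltac:(lia)). specialize (HN1 r ltac:(lia)).
    assert (0 < 2 / (be - al)) by (apply Rdiv_lt_0_compat; lra).
    assert (Hr0 : 1 <= INR r) by lra.
    assert (Hr1 : (1 <= r)%nat) by (apply INR_le; simpl; lra).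
    assert (Hc' := Rle_abs (- (2 * INR (q r) - INR r))). rewrite Rabs_Ropp in Hc'.
    assert (0 <= (1/2 - be) * INR r) by (apply Rmult_le_pos; lra).
    assert (Hq1 : th * INR r <= INR (q r)) by (unfold th; lra).
    assert (Hbr : 2 <= (be - al) * INR r).
    { assert (Hx : 2 / (be - al) <= INR r) by lra.
      apply (Rmult_le_compat_l (be - al)) in Hx; [|lra].
      replace ((be - al) * (2 / (be - al))) with 2 in Hx by (field; lra). lra. }
    assert (Hka : 0 <= (th - be) * INR r) by (unfold th; nra).
    eapply Rle_trans; [|apply (W_lower h (w2 (q r)) r al be ga ((th - be) * INR r)); auto; try lra].
    + assert (0 <= ga * ((th - be) * INR r)) by nra.
      replace (ga * (th - be) * (be - al) / 2 * INR r ^ 2) with (ga * ((th - be) * INR r) * ((be - al) * INR r / 2)) by (simpl; field).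
      apply Rmult_le_compat_l; lra.
    + intros i Hi. destruct (h_at r i Hi). apply Rmult_le_pos; auto. apply pos_INR.
    + intros i Hi. unfold w2. eapply Rle_trans; [|apply INR_sub_ge]. rewrite !S_INR. unfold th in *. lra.
Qed.
End Main.

Definition F1 (h : R -> R) (r : nat) : R := 2 * INR (r - 1 - mid r) / (Bc r (mid r) * Wq h w1 r (mid r)).
Definition F2 (h : R -> R) (r : nat) : R := 2 * INR (S (mid r)) / (Bc r (mid r) * Wq h w2 r (mid r)).

Section Final.
Variable h : R -> R.
Hypothesis h_smooth : smooth h.
Hypothesis h_range : forall t, 0 <= t <= 1 -> 0 <= h t <= 1.
Hypothesis h_nz_left : exists t, 0 <= t <= 1/2 /\ h t <> 0.
Hypothesis h_nz_right : exists t, 1/2 <= t <= 1 /\ h t <> 0.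
Variable p : nat -> nat.
Variable a : R.
Hypothesis Hp : forall r, (2 <= r)%nat -> (p r <= r - 2)%nat.
Hypothesis Ha : Un_cv (fun r => (2 * INR (p r) - INR r) / sqrt (INR r)) a.

Definition dd (r : nat) : R := (Rabs (2 * INR (p r) - INR r) + 1) / INR r.

Lemma dd_cv : Un_cv dd 0.
Proof.
  apply cvext_ev with (u := fun r => Rabs ((2 * INR (p r) - INR r) / sqrt (INR r)) * / sqrt (INR r) + / INR r).
  - exists 1%nat. intros r Hr. unfold dd.
    assert (0 < INR r) by (apply lt_0_INR; lia).
    assert (Hq : 0 < sqrt (INR r)) by (apply sqrt_lt_R0; auto).
    assert (Hss : sqrt (INR r) * sqrt (INR r) = INR r) by (apply sqrt_sqrt; lra).
    unfold Rdiv. rewrite Rabs_mult, Rabs_inv, (Rabs_pos_eq (sqrt (INR r))) by lra.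
    set (q := sqrt (INR r)) in *. rewrite <- Hss. field. lra.
  - replace 0 with (Rabs a * 0 + 0) by ring. apply CV_plus.
    + apply CV_mult. apply (continuity_seq Rabs); auto. apply Rcontinuity_abs. apply cv_inv_sqrt.
    + apply cv_inv_nat.
Qed.

Lemma y_le_dd r : (1 <= r)%nat -> Rabs (2 * INR (p r) - INR r) + 1 = dd r * INR r.
Proof. intros. unfold dd. assert (0 < INR r) by (apply lt_0_INR; lia). field. lra. Qed.

Lemma p_central : central p.
Proof.
  intros eps He. destruct (dd_cv eps He) as [N HN]. exists (S N). intros r Hr.
  specialize (HN r ltac:(lia)). unfold R_dist in HN. rewrite Rminus_0_r in HN.
  assert (0 < INR r) by (apply lt_0_INR; lia).
  pose proof (y_le_dd r ltac:(lia)). pose proof (Rle_abs (dd r)).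
  assert (dd r * INR r <= eps * INR r) by (apply Rmult_le_compat_r; lra). lra.
Qed.

Lemma pm_le r : (1 <= r)%nat -> Rabs (INR (p r) - INR (mid r)) <= dd r * INR r.
Proof.
  intros Hr. rewrite <- y_le_dd by auto. pose proof (mid_bounds r) as Hm.
  assert (INR (2 * mid r) <= INR r) by (apply le_INR; lia).
  assert (INR r <= INR (2 * mid r + 1)) by (apply le_INR; lia).
  rewrite plus_INR, mult_INR in *. simpl in *.
  pose proof (Rle_abs (2 * INR (p r) - INR r)). pose proof (Rle_abs (- (2 * INR (p r) - INR r))).
  rewrite Rabs_Ropp in H2. pose proof (Rabs_pos (2 * INR (p r) - INR r)).
  apply Rabs_le. lra.
Qed.

Lemma dd_ge0 r : (1 <= r)%nat -> 0 <= dd r.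
Proof. intros. unfold dd. apply Rmult_le_pos. pose proof (Rabs_pos (2 * INR (p r) - INR r)). lra.
  left; apply Rinv_0_lt_compat, lt_0_INR; lia. Qed.

Lemma fB1_cv : Un_cv (fun r => INR (r - 1 - mid r) / INR (r - 1 - p r)) 1.
Proof.
  apply ratio1 with (e := fun r => 4 * dd r).
  - destruct (p_central (1/4) ltac:(lra)) as [N HN]. exists (N + 8)%nat. intros r Hr.
    specialize (HN r ltac:(lia)). pose proof (Hp r ltac:(lia)).
    assert (HR8 : 8 <= INR r) by (replace 8 with (INR 8) by (simpl; lra); apply le_INR; lia).
    pose proof (Rle_abs (2 * INR (p r) - INR r)).
    pose proof (mid_bounds r) as Hm.
    assert (Hv : INR (r - 1 - p r) = INR r - 1 - INR (p r)) by (rewrite !minus_INR by lia; simpl; ring).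
    assert (Hu : INR (r - 1 - mid r) = INR r - 1 - INR (mid r)) by (rewrite !minus_INR by lia; simpl; ring).
    assert (Hv4 : INR r / 4 <= INR (r - 1 - p r)) by lra.
    split; [lra|]. rewrite Hu, Hv.
    replace (INR r - 1 - INR (mid r) - (INR r - 1 - INR (p r))) with (INR (p r) - INR (mid r)) by ring.
    eapply Rle_trans; [apply pm_le; lia|]. rewrite <- Hv. pose proof (dd_ge0 r ltac:(lia)). nra.
  - replace 0 with (4 * 0) by ring. apply cv_scal, dd_cv.
Qed.

Lemma fB2_cv : Un_cv (fun r => INR (S (mid r)) / INR (S (p r))) 1.
Proof.
  apply ratio1 with (e := fun r => 4 * dd r).
  - destruct (p_central (1/2) ltac:(lra)) as [N HN]. exists (N + 1)%nat. intros r Hr.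
    specialize (HN r ltac:(lia)).
    pose proof (Rle_abs (- (2 * INR (p r) - INR r))). rewrite Rabs_Ropp in H.
    assert (0 < INR r) by (apply lt_0_INR; lia).
    assert (Hv4 : INR r / 4 <= INR (S (p r))) by (rewrite S_INR; lra).
    split; [rewrite S_INR; pose proof (pos_INR (p r)); lra|]. rewrite !S_INR.
    replace (INR (mid r) + 1 - (INR (p r) + 1)) with (- (INR (p r) - INR (mid r))) by ring.
    rewrite Rabs_Ropp. eapply Rle_trans; [apply pm_le; lia|]. rewrite <- S_INR. pose proof (dd_ge0 r ltac:(lia)). nra.
  - replace 0 with (4 * 0) by ring. apply cv_scal, dd_cv.
Qed.

Lemma fC1_cv : Un_cv (fun r => Wq h w1 r (p r) / Wq h w1 r (mid r)) 1.
Proof.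
  destruct (W1_lower h h_smooth h_range h_nz_right mid mid_central) as [del [N [Hdel HN]]].
  apply ratio1 with (e := fun r => / del * dd r).
  - exists (N + 1)%nat. intros r Hr. specialize (HN r ltac:(lia)).
    assert (0 < INR r) by (apply lt_0_INR; lia).
    assert (0 < del * INR r ^ 2) by (apply Rmult_lt_0_compat; auto; apply pow_lt; auto).
    split; [lra|].
    eapply Rle_trans; [apply W_lip1; auto|].
    pose proof (pm_le r ltac:(lia)). pose proof (dd_ge0 r ltac:(lia)).
    apply Rle_trans with (INR r * (dd r * INR r)). apply Rmult_le_compat_l; lra.
    apply Rle_trans with (/ del * dd r * (del * INR r ^ 2)).
    right. simpl. field. lra.
    apply Rmult_le_compat_l; auto. apply Rmult_le_pos; auto. left; apply Rinv_0_lt_compat; auto.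
  - replace 0 with (/ del * 0) by ring. apply cv_scal, dd_cv.
Qed.

Lemma fC2_cv : Un_cv (fun r => Wq h w2 r (p r) / Wq h w2 r (mid r)) 1.
Proof.
  destruct (W2_lower h h_smooth h_range h_nz_left mid mid_central) as [del [N [Hdel HN]]].
  apply ratio1 with (e := fun r => / del * dd r).
  - exists (N + 1)%nat. intros r Hr. specialize (HN r ltac:(lia)).
    assert (0 < INR r) by (apply lt_0_INR; lia).
    assert (0 < del * INR r ^ 2) by (apply Rmult_lt_0_compat; auto; apply pow_lt; auto).
    split; [lra|].
    eapply Rle_trans; [apply W_lip2; auto|].
    pose proof (pm_le r ltac:(lia)). pose proof (dd_ge0 r ltac:(lia)).
    apply Rle_trans with (INR r * (dd r * INR r)). apply Rmult_le_compat_l; lra.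
    apply Rle_trans with (/ del * dd r * (del * INR r ^ 2)).
    right. simpl. field. lra.
    apply Rmult_le_compat_l; auto. apply Rmult_le_pos; auto. left; apply Rinv_0_lt_compat; auto.
  - replace 0 with (/ del * 0) by ring. apply cv_scal, dd_cv.
Qed.

Definition a1 (r i : nat) : R := if Nat.leb i r then 2 * h (INR i / INR r) * w1 (p r) i / Wq h w1 r (p r) else 0.
Definition a2 (r i : nat) : R := if Nat.leb i r then 2 * h (INR i / INR r) * w2 (p r) i / Wq h w2 r (p r) else 0.
Definition AA (s i : nat) : R := if Nat.even s then a1 (Nat.div2 s) i else a2 (Nat.div2 s) i.
Definition Z1 (x : nat -> R) (r : nat) : R :=
  lsum (map (fun i => 2 * h (INR i / INR r) * w1 (p r) i / Wq h w1 r (p r) * (x i - 1/2)) (seq 1 r)).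
Definition Z2 (x : nat -> R) (r : nat) : R :=
  lsum (map (fun i => 2 * h (INR i / INR r) * w2 (p r) i / Wq h w2 r (p r) * (x i - 1/2)) (seq 1 r)).

Lemma AA_even r i : AA (2 * r) i = a1 r i.
Proof. unfold AA. rewrite Nat.even_even, Nat.div2_double. reflexivity. Qed.
Lemma AA_odd r i : AA (2 * r + 1) i = a2 r i.
Proof. unfold AA. rewrite Nat.even_odd, Nat.add_1_r, Nat.div2_succ_double. reflexivity. Qed.

Lemma lsum_zero_tail (f : nat -> R) r k : (forall i, (r < i)%nat -> f i = 0) ->
  lsum (map f (seq 1 (r + k))) = lsum (map f (seq 1 r)).
Proof.
  intros H. rewrite seq_app, map_app, lsum_app.
  rewrite (lsum_ext f (fun _ => 0) (seq (1 + r) k)). rewrite lsum_const. ring.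
  intros i Hi. apply in_seq in Hi. apply H. lia.
Qed.

Lemma Zs_even x r : Zs AA x (2 * r) = Z1 x r.
Proof.
  unfold Zs, Z1.
  rewrite (lsum_ext _ (fun i => a1 r i * (x i - 1/2))) by (intros; rewrite AA_even; reflexivity).
  replace (2 * r)%nat with (r + r)%nat by lia.
  rewrite lsum_zero_tail.
  - apply lsum_ext. intros i Hi. apply in_seq in Hi. unfold a1.
    replace (Nat.leb i r) with true by (symmetry; apply Nat.leb_le; lia). reflexivity.
  - intros i Hi. unfold a1. replace (Nat.leb i r) with false by (symmetry; apply Nat.leb_gt; lia). ring.
Qed.

Lemma Zs_odd x r : Zs AA x (2 * r + 1) = Z2 x r.
Proof.
  unfold Zs, Z2.
  rewrite (lsum_ext _ (fun i => a2 r i * (x i - 1/2))) by (intros; rewrite AA_odd; reflexivity).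
  replace (2 * r + 1)%nat with (r + S r)%nat by lia.
  rewrite lsum_zero_tail.
  - apply lsum_ext. intros i Hi. apply in_seq in Hi. unfold a2.
    replace (Nat.leb i r) with true by (symmetry; apply Nat.leb_le; lia). reflexivity.
  - intros i Hi. unfold a2. replace (Nat.leb i r) with false by (symmetry; apply Nat.leb_gt; lia). ring.
Qed.

Lemma a_bound (w : nat -> nat -> R) del N :
  0 < del -> (forall r, (N <= r)%nat -> del * INR r ^ 2 <= Wq h w r (p r)) ->
  (forall r i, (2 <= r)%nat -> (1 <= i <= r)%nat -> 0 <= w (p r) i <= INR r) ->
  forall r i, (N + 2 <= r)%nat -> (1 <= i)%nat ->
  Rabs (if Nat.leb i r then 2 * h (INR i / INR r) * w (p r) i / Wq h w r (p r) else 0) <= (2 / del) / INR r.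
Proof.
  intros Hdel HW Hw r i Hr Hi1.
  assert (Hr0 : 0 < INR r) by (apply lt_0_INR; lia).
  assert (H2 : 0 <= 2 / del / INR r) by (apply Rlt_le, Rdiv_lt_0_compat; [apply Rdiv_lt_0_compat|]; lra).
  destruct (Nat.leb i r) eqn:E; [|rewrite Rabs_R0; auto].
  - apply Nat.leb_le in E.
    destruct (h_at h h_range r i ltac:(lia)) as [Hh0 Hh1]. destruct (Hw r i ltac:(lia) ltac:(lia)) as [Hw0 Hw1].
    specialize (HW r ltac:(lia)). assert (HWp : 0 < del * INR r ^ 2) by (apply Rmult_lt_0_compat; auto; apply pow_lt; auto).
    rewrite Rabs_pos_eq by (apply Rmult_le_pos; [nra|left; apply Rinv_0_lt_compat; lra]).
    apply Rle_trans with (2 * 1 * INR r / (del * INR r ^ 2)).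
    + unfold Rdiv. apply Rmult_le_compat. nra. left; apply Rinv_0_lt_compat; lra.
      apply Rmult_le_compat; nra. apply Rinv_le_contravar; auto.
    + right. simpl. field. lra.
Qed.

Lemma w1_range r i : (2 <= r)%nat -> (1 <= i <= r)%nat -> 0 <= w1 (p r) i <= INR r.
Proof. intros. unfold w1. split. apply pos_INR. apply le_INR. lia. Qed.
Lemma w2_range r i : (2 <= r)%nat -> (1 <= i <= r)%nat -> 0 <= w2 (p r) i <= INR r.
Proof. intros. unfold w2. split. apply pos_INR. apply le_INR. pose proof (Hp r H). lia. Qed.

Lemma AA_bound : exists c R0, 0 < c /\ forall s i, (R0 <= s)%nat -> (1 <= i <= s)%nat -> Rabs (AA s i) <= c / INR s.
Proof.
  destruct (W1_lower h h_smooth h_range h_nz_right p p_central) as [d1 [N1 [Hd1 HN1]]].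
  destruct (W2_lower h h_smooth h_range h_nz_left p p_central) as [d2 [N2 [Hd2 HN2]]].
  set (c1 := 2 / d1 + 2 / d2).
  assert (Hc1 : 0 < c1) by (unfold c1; assert (0 < 2 / d1) by (apply Rdiv_lt_0_compat; lra);
     assert (0 < 2 / d2) by (apply Rdiv_lt_0_compat; lra); lra).
  exists (3 * c1), (2 * (N1 + N2 + 2) + 2)%nat. split; [lra|].
  intros s i Hs Hi.
  assert (Hsp : 0 < INR s) by (apply lt_0_INR; lia).
  assert (0 < 2 / d1) by (apply Rdiv_lt_0_compat; lra). assert (0 < 2 / d2) by (apply Rdiv_lt_0_compat; lra).
  destruct (Nat.Even_or_Odd s) as [[r Hr]|[r Hr]]; subst s.
  - rewrite AA_even.
    assert (Hr0 : 0 < INR r) by (apply lt_0_INR; lia).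
    eapply Rle_trans; [apply (a_bound w1 d1 N1 Hd1 HN1 w1_range r i ltac:(lia) ltac:(lia))|].
    rewrite mult_INR. simpl (INR 2).
    apply Rle_trans with (c1 / INR r).
    + unfold Rdiv. apply Rmult_le_compat_r. left; apply Rinv_0_lt_compat; auto. unfold c1. lra.
    + apply (Rmult_le_reg_r (INR r * ((1 + 1) * INR r))). apply Rmult_lt_0_compat; lra.
      replace (c1 / INR r * (INR r * ((1 + 1) * INR r))) with (c1 * ((1+1) * INR r)) by (field; lra).
      replace (3 * c1 / ((1 + 1) * INR r) * (INR r * ((1 + 1) * INR r))) with (3 * c1 * INR r) by (field; lra).
      nra.
  - rewrite AA_odd.
    assert (Hr0 : 1 <= INR r) by (replace 1 with (INR 1) by reflexivity; apply le_INR; lia).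
    eapply Rle_trans; [apply (a_bound w2 d2 N2 Hd2 HN2 w2_range r i ltac:(lia) ltac:(lia))|].
    rewrite plus_INR, mult_INR. simpl (INR 2). simpl (INR 1).
    apply Rle_trans with (c1 / INR r).
    + unfold Rdiv. apply Rmult_le_compat_r. left; apply Rinv_0_lt_compat; lra. unfold c1. lra.
    + apply (Rmult_le_reg_r (INR r * ((1 + 1) * INR r + 1))). apply Rmult_lt_0_compat; lra.
      replace (c1 / INR r * (INR r * ((1 + 1) * INR r + 1))) with (c1 * ((1+1) * INR r + 1)) by (field; lra).
      replace (3 * c1 / ((1 + 1) * INR r + 1) * (INR r * ((1 + 1) * INR r + 1))) with (3 * c1 * INR r) by (field; lra).
      nra.
Qed.

Lemma Z1_eq x r : Wq h w1 r (p r) <> 0 -> Z1 x r = 2 / Wq h w1 r (p r) * X1 h r x (p r) - 1.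
Proof.
  intros HW. unfold Z1, X1.
  rewrite (lsum_ext _ (fun i => 2 / Wq h w1 r (p r) * (h (INR i / INR r) * x i * INR (i - S (p r)))
                          + (- 1 / Wq h w1 r (p r)) * (h (INR i / INR r) * w1 (p r) i))).
  - rewrite lsum_plus, !lsum_scal. fold (Wq h w1 r (p r)). field. auto.
  - intros i _. unfold w1. field. auto.
Qed.

Lemma Z2_eq x r : Wq h w2 r (p r) <> 0 -> Z2 x r = 2 / Wq h w2 r (p r) * X2 h r x (p r) - 1.
Proof.
  intros HW. unfold Z2, X2.
  rewrite (lsum_ext _ (fun i => 2 / Wq h w2 r (p r) * (h (INR i / INR r) * x i * INR (S (S (p r)) - i))
                          + (- 1 / Wq h w2 r (p r)) * (h (INR i / INR r) * w2 (p r) i))).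
  - rewrite lsum_plus, !lsum_scal. fold (Wq h w2 r (p r)). field. auto.
  - intros i _. unfold w2. field. auto.
Qed.

Lemma ident1 x r : (2 <= r)%nat -> 0 < Wq h w1 r (p r) -> 0 < Wq h w1 r (mid r) ->
  F1 h r * betti_entry h r x (p r) 1 =
  Bc r (p r) / Bc r (mid r) * (INR (r - 1 - mid r) / INR (r - 1 - p r)) *
  (Wq h w1 r (p r) / Wq h w1 r (mid r)) * (1 + Z1 x r).
Proof.
  intros Hr H1 H2. pose proof (Hp r Hr).
  rewrite betti1 by lia. rewrite Z1_eq by lra. unfold F1.
  assert (0 < INR (r - 1 - p r)) by (apply lt_0_INR; lia).
  pose proof (Bn_pos (r - 2) (p r)). pose proof (Bn_pos (r - 2) (mid r)). rewrite !Bc_Bn.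
  field. repeat split; lra.
Qed.

Lemma ident2 x r : (2 <= r)%nat -> 0 < Wq h w2 r (p r) -> 0 < Wq h w2 r (mid r) ->
  F2 h r * betti_entry h r x (p r) 2 =
  Bc r (p r) / Bc r (mid r) * (INR (S (mid r)) / INR (S (p r))) *
  (Wq h w2 r (p r) / Wq h w2 r (mid r)) * (1 + Z2 x r).
Proof.
  intros Hr H1 H2. pose proof (Hp r Hr).
  rewrite betti2 by lia. rewrite Z2_eq by lra. unfold F2.
  assert (0 < INR (S (p r))) by (apply lt_0_INR; lia).
  pose proof (Bn_pos (r - 2) (p r)). pose proof (Bn_pos (r - 2) (mid r)). rewrite !Bc_Bn.
  field. repeat split; lra.
Qed.

Lemma final_ae : ae_Omega (fun x =>
    Un_cv (fun r => F1 h r * betti_entry h r x (p r) 1) (exp (- a ^ 2 / 2)) /\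
    Un_cv (fun r => F2 h r * betti_entry h r x (p r) 2) (exp (- a ^ 2 / 2))).
Proof.
  destruct AA_bound as [c [R0 [Hc HA]]].
  destruct (W1_lower h h_smooth h_range h_nz_right p p_central) as [d1 [N1 [Hd1 HN1]]].
  destruct (W1_lower h h_smooth h_range h_nz_right mid mid_central) as [d2 [N2 [Hd2 HN2]]].
  destruct (W2_lower h h_smooth h_range h_nz_left p p_central) as [d3 [N3 [Hd3 HN3]]].
  destruct (W2_lower h h_smooth h_range h_nz_left mid mid_central) as [d4 [N4 [Hd4 HN4]]].
  set (NN := (N1 + N2 + N3 + N4 + 2)%nat).
  assert (Hpos : forall d N (W : nat -> R), 0 < d -> (forall r, (N <= r)%nat -> d * INR r ^ 2 <= W r) ->
            forall r, (N + 1 <= r)%nat -> 0 < W r).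
  { intros d N W Hd HW r Hr. specialize (HW r ltac:(lia)).
    assert (0 < INR r) by (apply lt_0_INR; lia). assert (0 < d * INR r ^ 2) by (apply Rmult_lt_0_compat; auto; apply pow_lt; auto). lra. }
  unfold ae_Omega. apply null_mono with (1 := ae_Z AA c R0 Hc HA).
  intros x Hx Hnot Hcv. apply Hnot.
  assert (HZ1 : Un_cv (Z1 x) 0).
  { intros e He. destruct (Hcv e He) as [N HN]. exists N. intros r Hr. rewrite <- Zs_even. apply HN. lia. }
  assert (HZ2 : Un_cv (Z2 x) 0).
  { intros e He. destruct (Hcv e He) as [N HN]. exists N. intros r Hr. rewrite <- Zs_odd. apply HN. lia. }
  replace (exp (- a ^ 2 / 2)) with (exp (- a ^ 2 / 2) * 1 * 1 * (1 + 0)) by ring.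
  split.
  - apply cvext_ev with (u := fun r => Bc r (p r) / Bc r (mid r) * (INR (r - 1 - mid r) / INR (r - 1 - p r)) *
        (Wq h w1 r (p r) / Wq h w1 r (mid r)) * (1 + Z1 x r)).
    + exists NN. intros r Hr. symmetry. apply ident1. unfold NN in Hr; lia.
      apply (Hpos d1 N1 (fun r => Wq h w1 r (p r))); auto. unfold NN in Hr; lia.
      apply (Hpos d2 N2 (fun r => Wq h w1 r (mid r))); auto. unfold NN in Hr; lia.
    + apply CV_mult; [apply CV_mult; [apply CV_mult|]|].
      * apply binom_lim; auto.
      * apply fB1_cv.
      * apply fC1_cv.
      * apply CV_plus; [apply cv_const|auto].
  - apply cvext_ev with (u := fun r => Bc r (p r) / Bc r (mid r) * (INR (S (mid r)) / INR (S (p r))) *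
        (Wq h w2 r (p r) / Wq h w2 r (mid r)) * (1 + Z2 x r)).
    + exists NN. intros r Hr. symmetry. apply ident2. unfold NN in Hr; lia.
      apply (Hpos d3 N3 (fun r => Wq h w2 r (p r))); auto. unfold NN in Hr; lia.
      apply (Hpos d4 N4 (fun r => Wq h w2 r (mid r))); auto. unfold NN in Hr; lia.
    + apply CV_mult; [apply CV_mult; [apply CV_mult|]|].
      * apply binom_lim; auto.
      * apply fB2_cv.
      * apply fC2_cv.
      * apply CV_plus; [apply cv_const|auto].
Qed.
End Final.

Theorem mainTheorem8 (h : R -> R)
  (h_smooth : smooth h)
  (h_range : forall t, 0 <= t <= 1 -> 0 <= h t <= 1)
  (h_nz_left : exists t, 0 <= t <= 1/2 /\ h t <> 0)
  (h_nz_right : exists t, 1/2 <= t <= 1 /\ h t <> 0) :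
  exists F1 F2 : nat -> R,
    forall (p : nat -> nat) (a : R),
      (forall r, (2 <= r)%nat -> (p r <= r - 2)%nat) ->
      Un_cv (fun r => (2 * INR (p r) - INR r) / sqrt (INR r)) a ->
      ae_Omega (fun x =>
        Un_cv (fun r => F1 r * betti_entry h r x (p r) 1) (exp (- a ^ 2 / 2)) /\
        Un_cv (fun r => F2 r * betti_entry h r x (p r) 2) (exp (- a ^ 2 / 2))).
Proof.
  exists (F1 h), (F2 h). intros p a Hp Ha.
  apply final_ae; auto.
Qed.
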